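(* Let $p,q$ be integers with $2\le p<q\le5p-1$ and fix $\beta_3\in\mathbb{R}$. For $(\beta_1,\beta_2)\in\mathbb{R}^2$ consider $$l_{\beta_3}(u;\beta_1,\beta_2)=\beta_1u+\beta_2u^p+\beta_3u^q-\tfrac12u\log u-\tfrac12(1-u)\log(1-u),\qquad u\in[0,1].$$ Let $u_0\in(0,1)$ be the unique solution of $\beta_3=\frac{pu_0-(p-1)}{2q(q-1)(q-p)u_0^{q-1}(1-u_0)^2}$ (it exists and is unique), and set $$\beta_1^c=\tfrac12\log\tfrac{u_0}{1-u_0}-\tfrac{1}{2(p-1)(1-u_0)}+\tfrac{pu_0-(p-1)}{2(p-1)(q-1)(1-u_0)^2},\qquad \beta_2^c=\tfrac{qu_0-(q-1)}{2p(p-1)(p-q)u_0^{p-1}(1-u_0)^2}.$$ Then there is a V-shaped region $V\subset\mathbb{R}^2$ with corner point $(\beta_1^c,\beta_2^c)$, namely $V=\{(\beta_1,\beta_2):\beta_1<\beta_1^c,\ L(\beta_1)<\beta_2<U(\beta_1)\}$ for two continuous decreasing functions $L<U$ on $(-\infty,\beta_1^c)$ with $L(\beta_1),U(\beta_1)\to\beta_2^c$ as $\beta_1\to\beta_1^c$ and $L(\beta_1),U(\beta_1)\to+\infty$ as $\beta_1\to-\infty$, such that: for $(\beta_1,\beta_2)\notin V$, $l_{\beta_3}(\cdot;\beta_1,\beta_2)$ has exactly one local maximizer on $[0,1]$ (hence it is the global maximizer); for $(\beta_1,\beta_2)\in V$, $l_{\beta_3}(\cdot;\beta_1,\beta_2)$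 has exactly two local maximizers $u_1^*<u_2^*$ in $(0,1)$. Moreover, for every $\beta_1<\beta_1^c$ there is a unique $\beta_2=r_{\beta_3}(\beta_1)\in(L(\beta_1),U(\beta_1))$ such that $u_1^*$ and $u_2^*$ are both global maximizers of $l_{\beta_3}(\cdot;\beta_1,r_{\beta_3}(\beta_1))$, and $r_{\beta_3}$ is a decreasing function of $\beta_1$.
   Context: Here $0\log 0=0$, so $l_{\beta_3}$ is continuous on $[0,1]$; a local maximizer means a point of $[0,1]$ at which $l_{\beta_3}(\cdot;\beta_1,\beta_2)$ attains a local maximum. *)

(* Defs.v *)
From Stdlib Require Import Reals Lra.
Open Scope R_scope.

(* x log x with the convention 0 log 0 = 0 (only used on [0,1]). *)
Definition xlnx (x : R) : R := if Rle_dec x 0 then 0 else x * ln x.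

Definition lfun (p q : nat) (b3 b1 b2 u : R) : R :=
  b1 * u + b2 * u ^ p + b3 * u ^ q - / 2 * xlnx u - / 2 * xlnx (1 - u).

Definition is_local_max01 (f : R -> R) (u : R) : Prop :=
  0 <= u <= 1 /\
  exists d, 0 < d /\ forall v, 0 <= v <= 1 -> Rabs (v - u) < d -> f v <= f u.

Definition is_global_max01 (f : R -> R) (u : R) : Prop :=
  0 <= u <= 1 /\ forall v, 0 <= v <= 1 -> f v <= f u.

Definition u0_eq (p q : nat) (b3 u0 : R) : Prop :=
  b3 = (INR p * u0 - (INR p - 1)) /
       (2 * INR q * (INR q - 1) * (INR q - INR p) * u0 ^ (q - 1) * (1 - u0) ^ 2).

Definition beta1c (p q : nat) (u0 : R) : R :=
  / 2 * ln (u0 / (1 - u0)) - / (2 * (INR p - 1) * (1 - u0))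
  + (INR p * u0 - (INR p - 1)) / (2 * (INR p - 1) * (INR q - 1) * (1 - u0) ^ 2).

Definition beta2c (p q : nat) (u0 : R) : R :=
  (INR q * u0 - (INR q - 1)) /
  (2 * INR p * (INR p - 1) * (INR p - INR q) * u0 ^ (p - 1) * (1 - u0) ^ 2).

(* Main.v *)
Require Import Defs.
From Stdlib Require Import Reals Lra Lia Ranalysis5 ClassicalEpsilon.
From Coquelicot Require Import Coquelicot.
Open Scope R_scope.

Definition PP (a:nat) := INR a + 2.
Definition QQ (a c:nat) := INR a + INR c + 3.

Definition lt_ (a c:nat) b3 b1 b2 u :=
  b1*u + b2*u^(S(S a)) + b3*u^(S(S(S(c+a)))) - /2*(u*ln u) - /2*((1-u)*ln(1-u)).
Definition gfun (a c:nat) b3 b2 u :=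
  /2*(ln u - ln(1-u)) - QQ a c*b3*u^(S(S(c+a))) - PP a*b2*u^(S a).
Definition betaf (a c:nat) b3 u :=
  /(PP a*(PP a - 1)) * (/(2*u^(S a)*(1-u)) - QQ a c*(QQ a c - 1)*b3*u^(S c)).
Definition kf (a c:nat) u :=
  (PP a*u - (PP a - 1)) / (2*QQ a c*(QQ a c - 1)*(QQ a c - PP a)*u^(S(S(c+a)))*(1-u)^2).
Definition B1f a c b3 u := gfun a c b3 (betaf a c b3 u) u.

Lemma INR_SS a : INR (S (S a)) = PP a.
Proof. unfold PP; rewrite !S_INR; ring. Qed.
Lemma INR_SSS a c : INR (S (S (S (c+a)))) = QQ a c.
Proof. unfold QQ; rewrite !S_INR, plus_INR; ring. Qed.
Lemma INR_S a : INR (S a) = PP a - 1.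
Proof. unfold PP; rewrite !S_INR; ring. Qed.
Lemma INR_SS' a c : INR (S (S (c+a))) = QQ a c - 1.
Proof. unfold QQ; rewrite !S_INR, plus_INR; ring. Qed.
Lemma PP_ge a : 2 <= PP a.
Proof. unfold PP; pose proof (pos_INR a); lra. Qed.
Lemma QQ_ge a c : PP a + 1 <= QQ a c.
Proof. unfold PP, QQ; pose proof (pos_INR c); lra. Qed.

Ltac fold_INR := repeat match goal with
  |- context [match ?n with 0%nat => 1 | S _ => INR ?n + 1 end] =>
    change (match n with 0%nat => 1 | S _ => INR n + 1 end) with (INR (S n)) end.
Ltac norm := fold_INR; cbn [pred pow]; rewrite ?S_INR, ?plus_INR, ?pow_add; unfold PP, QQ;
  repeat match goal with |- context[(?x + - ?y)] => change (x + - y) with (x - y) end.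

Lemma der_l a c b3 b1 b2 u : 0 < u < 1 ->
  derivable_pt_lim (lt_ a c b3 b1 b2) u (b1 - gfun a c b3 b2 u).
Proof.
  intros Hu. apply is_derive_Reals. unfold lt_, gfun.
  auto_derive. { split; [lra|split;[lra|auto]]. }
  norm. field. lra.
Qed.

Ltac pose_INR := repeat (match goal with |- context[INR ?n] =>
  lazymatch goal with H: 0 <= INR n |- _ => fail | _ => assert (0 <= INR n) by apply pos_INR end end).
Ltac pos := repeat (apply Rmult_lt_0_compat || apply pow_lt || apply Rinv_0_lt_compat); pose_INR; try lra.
Ltac nz := repeat split; try (apply pow_nonzero); try lra; pose_INR; try lra.

Lemma der_g a c b3 b2 u : 0 < u < 1 ->
  derivable_pt_lim (gfun a c b3 b2) u (PP a*(PP a-1)*u^a*(betaf a c b3 u - b2)).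
Proof.
  intros Hu. apply is_derive_Reals. unfold gfun, betaf.
  auto_derive. { split; [lra|split;[lra|auto]]. }
  norm. field. nz.
Qed.

Definition Nf a c u := PP a*QQ a c*u^2 - (2*PP a*QQ a c - PP a - QQ a c - 1)*u + (PP a-1)*(QQ a c-1).

Lemma der_beta a c b3 u : 0 < u < 1 ->
  derivable_pt_lim (betaf a c b3) u
   (QQ a c*(QQ a c-1)*(QQ a c-PP a)*u^c/(PP a*(PP a-1)) * (kf a c u - b3)).
Proof.
  intros Hu. apply is_derive_Reals. unfold kf, betaf.
  auto_derive. { repeat split; auto. apply Rgt_not_eq; pos. }
  norm. field. nz.
Qed.

Lemma der_k a c u : 0 < u < 1 ->
  derivable_pt_lim (kf a c) u
   (Nf a c u / (2*QQ a c*(QQ a c-1)*(QQ a c-PP a)*u^(S(S(S(c+a))))*(1-u)^3)).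
Proof.
  intros Hu. apply is_derive_Reals. unfold kf, Nf.
  auto_derive. { repeat split; auto. apply Rgt_not_eq. unfold PP, QQ. pos. }
  norm. field. nz.
Qed.

Lemma dcont f x l : derivable_pt_lim f x l -> continuity_pt f x.
Proof. intros H. apply derivable_continuous_pt. exists l. exact H. Qed.

Lemma incr_noexc f f' x y : x < y ->
  (forall w, x <= w <= y -> derivable_pt_lim f w (f' w)) ->
  (forall w, x < w < y -> 0 < f' w) -> f x < f y.
Proof.
  intros Hxy Hd Hp. destruct (MVT_cor2 f f' x y Hxy Hd) as [z [Hz1 Hz2]].
  specialize (Hp z Hz2). nra.
Qed.

Lemma incr_exc f f' x y e : x < y ->
  (forall w, x <= w <= y -> derivable_pt_lim f w (f' w)) ->
  (forall w, x < w < y -> w <> e -> 0 < f' w) -> f x < f y.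
Proof.
  intros Hxy Hd Hp.
  destruct (Rlt_or_le x e) as [H1|H1]; [destruct (Rlt_or_le e y) as [H2|H2]|].
  - apply Rlt_trans with (f e).
    + apply incr_noexc with f'; [lra| intros; apply Hd; lra | intros; apply Hp; lra].
    + apply incr_noexc with f'; [lra| intros; apply Hd; lra | intros; apply Hp; lra].
  - apply incr_noexc with f'; [lra| intros; apply Hd; lra | intros; apply Hp; lra].
  - apply incr_noexc with f'; [lra| intros; apply Hd; lra | intros; apply Hp; lra].
Qed.

Lemma decr_exc f f' x y e : x < y ->
  (forall w, x <= w <= y -> derivable_pt_lim f w (f' w)) ->
  (forall w, x < w < y -> w <> e -> f' w < 0) -> f y < f x.
Proof.
  intros Hxy Hd Hp.
  assert (H := incr_exc (fun w => - f w) (fun w => - f' w) x y e Hxy).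
  cut (- f x < - f y). lra. apply H.
  - intros w Hw. apply (derivable_pt_lim_opp f w (f' w)). auto.
  - intros w Hw Hne. specialize (Hp w Hw Hne). lra.
Qed.

Lemma ln_le_x1 y : 0 < y -> ln y <= y - 1.
Proof. intros H. pose proof (exp_ineq1_le (ln y)). rewrite exp_ln in H0; lra. Qed.

Lemma ln_neg y : 0 < y < 1 -> ln y < 0.
Proof. intros H. rewrite <- ln_1. apply ln_increasing; lra. Qed.

Lemma ln_le y z : 0 < y -> y <= z -> ln y <= ln z.
Proof. intros H1 [H2|H2]. left; apply ln_increasing; auto. subst; lra. Qed.

Lemma ln_small M : exists d, 0 < d <= /2 /\ forall u, 0 < u <= d -> ln u <= M.
Proof.
  exists (Rmin (/2) (exp M)). split.
  - split. apply Rmin_glb_lt. lra. apply exp_pos. apply Rmin_l.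
  - intros u Hu. apply Rle_trans with (ln (exp M)).
    + apply ln_le. lra. apply Rle_trans with (1:=proj2 Hu). apply Rmin_r.
    + rewrite ln_exp. lra.
Qed.

Lemma pow_le_self v n : 0 <= v <= 1 -> v ^ (S n) <= v.
Proof.
  intros Hv. induction n. simpl; lra.
  change (v ^ S (S n)) with (v * v ^ (S n)). 
  assert (0 <= v ^ S n) by (apply pow_le; lra). nra.
Qed.

Lemma pow_le1 v n : 0 <= v <= 1 -> 0 <= v ^ n <= 1.
Proof.
  intros Hv. split. apply pow_le; lra. induction n. simpl; lra.
  simpl. assert (0 <= v ^ n) by (apply pow_le; lra). nra.
Qed.

Lemma bern v n : 0 <= v <= 1 -> 1 - v ^ n <= INR n * (1 - v).
Proof.
  intros Hv. induction n. simpl; lra.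
  rewrite S_INR. simpl. pose proof (pow_le1 v n Hv). nra.
Qed.

Definition incr_on (f : R -> R) x y := forall s t, x <= s -> s < t -> t <= y -> f s < f t.
Definition decr_on (f : R -> R) x y := forall s t, x <= s -> s < t -> t <= y -> f t < f s.

Lemma incr_le f x y s t : incr_on f x y -> x <= s -> s <= t -> t <= y -> f s <= f t.
Proof. intros H H1 [H2|H2] H3. left; apply H; auto. subst; lra. Qed.
Lemma decr_le f x y s t : decr_on f x y -> x <= s -> s <= t -> t <= y -> f t <= f s.
Proof. intros H H1 [H2|H2] H3. left; apply H; auto. subst; lra. Qed.

Lemma not_lmax_right f v w d : 0 <= v -> v < w -> w <= 1 ->
  (forall w', v < w' <= w -> f v < f w') -> 0 < d ->
  ~ (forall v', 0 <= v' <= 1 -> Rabs (v' - v) < d -> f v' <= f v).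
Proof.
  intros H0 H1 H2 H4 Hd H. set (w' := Rmin w (v + d/2)).
  assert (v < w' <= w). { unfold w'. split. apply Rmin_glb_lt; lra. apply Rmin_l. }
  assert (w' <= v + d/2) by apply Rmin_r.
  assert (f w' <= f v). { apply H. lra. rewrite Rabs_right; lra. }
  specialize (H4 w' H3). lra.
Qed.

Lemma not_lmax_left f v w d : w < v -> v <= 1 -> 0 <= w ->
  (forall w', w <= w' < v -> f v < f w') -> 0 < d ->
  ~ (forall v', 0 <= v' <= 1 -> Rabs (v' - v) < d -> f v' <= f v).
Proof.
  intros H0 H1 H2 H4 Hd H. set (w' := Rmax w (v - d/2)).
  assert (w <= w' < v). { unfold w'. split. apply Rmax_l. apply Rmax_lub_lt; lra. }
  assert (v - d/2 <= w') by apply Rmax_r.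
  assert (f w' <= f v). { apply H. lra. rewrite Rabs_left; lra. }
  specialize (H4 w' H3). lra.
Qed.

Lemma unimodal f u : 0 < u < 1 -> incr_on f 0 u -> decr_on f u 1 ->
  is_local_max01 f u /\ is_global_max01 f u /\ forall v, is_local_max01 f v -> v = u.
Proof.
  intros Hu Hi Hdc.
  assert (G : is_global_max01 f u).
  { split. lra. intros v Hv. destruct (Rle_or_lt v u).
    - apply (incr_le f 0 u); auto; lra.
    - apply (decr_le f u 1 u v Hdc); lra. }
  split; [|split; auto].
  - split. lra. exists 1. split. lra. intros v Hv _. apply G; auto.
  - intros v [Hv [d [Hd H]]].
    destruct (Rtotal_order v u) as [H1|[H1|H1]]; auto; exfalso.
    + refine (not_lmax_right f v u d _ _ _ _ Hd H); [lra|lra|lra|].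
      intros w' Hw'. apply Hi; lra.
    + refine (not_lmax_left f v u d _ _ _ _ Hd H); [lra|lra|lra|].
      intros w' Hw'. apply Hdc; lra.
Qed.

Lemma bimodal f u1 m u2 : 0 < u1 < m -> m < u2 < 1 ->
  incr_on f 0 u1 -> decr_on f u1 m -> incr_on f m u2 -> decr_on f u2 1 ->
  is_local_max01 f u1 /\ is_local_max01 f u2 /\
  (forall v, is_local_max01 f v -> v = u1 \/ v = u2) /\
  (forall v, 0 <= v <= 1 -> f v <= Rmax (f u1) (f u2)).
Proof.
  intros H1 H2 I1 D1 I2 D2.
  assert (Hm : forall v, 0 <= v <= m -> f v <= f u1).
  { intros v Hv. destruct (Rle_or_lt v u1).
    - apply (incr_le f 0 u1); auto; lra.
    - apply (decr_le f u1 m u1 v D1); lra. }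
  assert (Hm2 : forall v, m <= v <= 1 -> f v <= f u2).
  { intros v Hv. destruct (Rle_or_lt v u2).
    - apply (incr_le f m u2); auto; lra.
    - apply (decr_le f u2 1 u2 v D2); lra. }
  split; [|split; [|split]].
  - split. lra. exists (m - u1). split. lra. intros v Hv Ha.
    apply Hm. split. lra. apply Rabs_def2 in Ha. lra.
  - split. lra. exists (u2 - m). split. lra. intros v Hv Ha.
    apply Hm2. split. apply Rabs_def2 in Ha. lra. lra.
  - intros v [Hv [d [Hd H]]].
    destruct (Rtotal_order v u1) as [Ha|[Ha|Ha]]; [exfalso| left; auto|].
    { refine (not_lmax_right f v u1 d _ _ _ _ Hd H); [lra|lra|lra|].
      intros w' Hw'. apply I1; lra. }
    destruct (Rle_or_lt v m) as [Hb|Hb].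
    { exfalso; refine (not_lmax_left f v u1 d _ _ _ _ Hd H); [lra|lra|lra|].
      intros w' Hw'. apply D1; lra. }
    destruct (Rtotal_order v u2) as [Hc|[Hc|Hc]]; [exfalso| right; auto |exfalso].
    { refine (not_lmax_right f v u2 d _ _ _ _ Hd H); [lra|lra|lra|].
      intros w' Hw'. apply I2; lra. }
    { refine (not_lmax_left f v u2 d _ _ _ _ Hd H); [lra|lra|lra|].
      intros w' Hw'. apply D2; lra. }
  - intros v Hv. destruct (Rle_or_lt v m).
    + apply Rle_trans with (f u1). apply Hm; lra. apply Rmax_l.
    + apply Rle_trans with (f u2). apply Hm2; lra. apply Rmax_r.
Qed.

Definition e0 a c := (2*PP a*QQ a c - PP a - QQ a c - 1)/(2*PP a*QQ a c).

Lemma Nf_pos a c u : INR c <= 4*INR a + 6 -> u <> e0 a c -> 0 < Nf a c u.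
Proof.
  intros Hc Hu. unfold Nf, e0 in *.
  pose proof (PP_ge a) as HP. pose proof (QQ_ge a c) as HQ.
  set (P := PP a) in *. set (Q := QQ a c) in *.
  assert (HQ5 : Q <= 5*P - 1) by (unfold P, Q, PP, QQ; lra).
  set (B := 2*P*Q - P - Q - 1).
  assert (HD : (P+Q+1)^2 - 8*P*Q <= 0).
  { assert (0 <= (Q-P-1)*(5*P-1-Q)) by (apply Rmult_le_pos; lra). nra. }
  assert (Hn : 2*P*Q*u - B <> 0).
  { intro H. apply Hu. unfold B. field_simplify_eq. 2: nra. fold B. lra. }
  assert (4*P*Q*(P*Q*u^2 - B*u + (P-1)*(Q-1)) = (2*P*Q*u - B)^2 - ((P+Q+1)^2 - 8*P*Q)).
  { unfold B. ring. }
  assert (0 < (2*P*Q*u - B)^2) by (apply pow_lt_compat_0 || (simpl; nra)).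
  assert (0 < 4*P*Q) by nra.
  fold B. nra.
Qed.

Lemma k_incr a c x y : INR c <= 4*INR a + 6 -> 0 < x -> x < y -> y < 1 -> kf a c x < kf a c y.
Proof.
  intros Hc Hx Hxy Hy.
  apply incr_exc with (f' := fun u => Nf a c u / (2*QQ a c*(QQ a c-1)*(QQ a c-PP a)*u^(S(S(S(c+a))))*(1-u)^3)) (e := e0 a c); auto.
  - intros w Hw. apply der_k. lra.
  - intros w Hw Hne. apply Rdiv_lt_0_compat. apply Nf_pos; auto.
    pose proof (PP_ge a). pose proof (QQ_ge a c). pos.
Qed.

Lemma k_cont a c u : 0 < u < 1 -> continuity_pt (kf a c) u.
Proof. intros. eapply dcont. apply der_k. auto. Qed.

Lemma kden_pos a c u : 0 < u < 1 -> 0 < 2*QQ a c*(QQ a c-1)*(QQ a c-PP a)*u^(S(S(c+a)))*(1-u)^2.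
Proof. intros. pose proof (PP_ge a). pose proof (QQ_ge a c). pos. Qed.

Lemma k_low a c b3 : exists x, 0 < x < 1 /\ kf a c x < b3.
Proof.
  pose proof (PP_ge a) as HP. pose proof (QQ_ge a c) as HQ.
  set (K := 2*QQ a c*(QQ a c-1)*(QQ a c-PP a)).
  assert (HK : 0 < K) by (unfold K; pos).
  set (x := Rmin ((PP a - 1)/(2*PP a)) (/(2*K*(Rabs b3 + 1)))).
  assert (Hb := Rabs_pos b3).
  assert (Hx0 : 0 < x). { unfold x. apply Rmin_glb_lt. apply Rdiv_lt_0_compat; lra. pos. }
  assert (Hx1 : x <= (PP a - 1)/(2*PP a)) by apply Rmin_l.
  assert (Hx2 : x <= /(2*K*(Rabs b3 + 1))) by apply Rmin_r.
  assert (Hx3 : (PP a - 1)/(2*PP a) < 1). { apply Rmult_lt_reg_r with (2*PP a). lra. field_simplify; lra. }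
  exists x. split. lra.
  assert (Hd := kden_pos a c x). specialize (Hd ltac:(lra)).
  unfold kf. fold K. 
  set (Dn := K * x ^ S (S (c + a)) * (1 - x) ^ 2) in *.
  assert (HDn : Dn <= K * x).
  { unfold Dn. assert (x ^ S (S (c+a)) <= x) by (apply pow_le_self; lra).
    assert (0 <= x ^ S (S (c+a))) by (apply pow_le; lra).
    assert ((1-x)^2 <= 1) by (simpl; nra). 
    assert (0 <= (1-x)^2) by (simpl; nra).
    set (y := x ^ S (S (c+a))) in *.
    apply Rle_trans with (K*y).
    - rewrite Rmult_assoc. apply Rmult_le_compat_l. lra. nra.
    - apply Rmult_le_compat_l; lra. }
  assert (HKx : K * x * (Rabs b3 + 1) <= /2).
  { apply Rmult_le_compat_l with (r := 2*K*(Rabs b3+1)) in Hx2; [|left; pos].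
    rewrite Rinv_r in Hx2 by (apply Rgt_not_eq; unfold Rgt; pos). nra. }
  assert (Hnum : PP a * x - (PP a - 1) <= - (PP a - 1)/2).
  { apply Rmult_le_compat_l with (r := 2*PP a) in Hx1; [|lra].
    replace (2 * PP a * ((PP a - 1) / (2 * PP a))) with (PP a - 1) in Hx1 by (field; lra). lra. }
  assert (Dn = 2 * QQ a c * (QQ a c - 1) * (QQ a c - PP a) * x ^ S (S (c + a)) * (1 - x) ^ 2) by reflexivity.
  apply Rmult_lt_reg_r with Dn. lra.
  unfold Rdiv. rewrite Rmult_assoc, Rinv_l by lra. rewrite Rmult_1_r.
  assert (- Rabs b3 <= b3) by (apply Rabs_maj2 || (pose proof (Rabs_maj2 b3); lra)).
  nra.
Qed.

Lemma k_high a c b3 : exists y, 0 < y < 1 /\ b3 < kf a c y.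
Proof.
  pose proof (PP_ge a) as HP. pose proof (QQ_ge a c) as HQ.
  set (K := 2*QQ a c*(QQ a c-1)*(QQ a c-PP a)).
  assert (HK : 0 < K) by (unfold K; pos).
  assert (Hb := Rabs_pos b3).
  set (t := Rmin (/(2*PP a)) (/(4*K*(Rabs b3 + 1)))).
  assert (Ht0 : 0 < t). { unfold t. apply Rmin_glb_lt; pos. }
  assert (Ht1 : t <= /(2*PP a)) by apply Rmin_l.
  assert (Ht2 : t <= /(4*K*(Rabs b3 + 1))) by apply Rmin_r.
  assert (Ht3 : /(2*PP a) <= /4). { apply Rinv_le_contravar; lra. }
  exists (1 - t). split. lra.
  assert (Hd := kden_pos a c (1-t)). specialize (Hd ltac:(lra)).
  unfold kf. fold K.
  set (Dn := K * (1-t) ^ S (S (c + a)) * (1 - (1-t)) ^ 2) in *.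
  assert (HDn : Dn <= K * t).
  { unfold Dn. replace (1 - (1-t)) with t by ring.
    assert (0 <= (1-t) ^ S (S (c+a)) <= 1) by (apply pow_le1; lra).
    set (y := (1-t) ^ S (S (c+a))) in *.
    assert (t^2 <= t) by (simpl; nra).
    apply Rle_trans with (K*t^2).
    - rewrite Rmult_assoc. apply Rmult_le_compat_l. lra. simpl; nra.
    - apply Rmult_le_compat_l; lra. }
  assert (HKt : K * t * (Rabs b3 + 1) <= /4).
  { apply Rmult_le_compat_l with (r := 4*K*(Rabs b3+1)) in Ht2; [|left; pos].
    rewrite Rinv_r in Ht2 by (apply Rgt_not_eq; unfold Rgt; pos). nra. }
  assert (Hnum : /2 <= PP a * (1-t) - (PP a - 1)).
  { apply Rmult_le_compat_l with (r := 2*PP a) in Ht1; [|lra].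
    rewrite Rinv_r in Ht1 by lra. nra. }
  assert (Dn = 2 * QQ a c * (QQ a c - 1) * (QQ a c - PP a) * (1-t) ^ S (S (c + a)) * (1 - (1-t)) ^ 2) by reflexivity.
  apply Rmult_lt_reg_r with Dn. lra.
  unfold Rdiv. rewrite Rmult_assoc, Rinv_l by lra. rewrite Rmult_1_r.
  pose proof (Rle_abs b3). nra.
Qed.

Lemma u0_exists a c b3 : INR c <= 4*INR a + 6 ->
  exists u0, 0 < u0 < 1 /\ kf a c u0 = b3.
Proof.
  intros Hc. destruct (k_low a c b3) as [x [Hx Hkx]].
  destruct (k_high a c b3) as [y [Hy Hky]].
  assert (x < y).
  { destruct (Rlt_or_le x y) as [H|H]; auto. destruct H as [H|H].
    - pose proof (k_incr a c y x Hc ltac:(lra) H ltac:(lra)). lra.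
    - subst. lra. }
  destruct (IVT_interv (fun u => kf a c u - b3) x y) as [z [Hz1 Hz2]]; auto.
  - intros u Hu. apply continuity_pt_minus. apply k_cont; lra. apply continuity_pt_const. intros ? ?; auto.
  - lra.
  - lra.
  - exists z. split. lra. lra.
Qed.

Lemma k_lt a c u v : INR c <= 4*INR a + 6 -> 0 < u -> u < v -> v < 1 -> kf a c u < kf a c v.
Proof. apply k_incr. Qed.

Definition Hyp a c b3 u0 := INR c <= 4*INR a + 6 /\ 0 < u0 < 1 /\ kf a c u0 = b3.

Lemma beta_cont a c b3 u : 0 < u < 1 -> continuity_pt (betaf a c b3) u.
Proof. intros. eapply dcont. apply der_beta. auto. Qed.

Lemma betaC_pos a c w : 0 < w -> 0 < QQ a c*(QQ a c-1)*(QQ a c-PP a)*w^c/(PP a*(PP a-1)).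
Proof. intros. pose proof (PP_ge a). pose proof (QQ_ge a c). unfold Rdiv. pos. Qed.

Lemma beta_dec a c b3 u0 x y : Hyp a c b3 u0 -> 0 < x -> x < y -> y <= u0 ->
  betaf a c b3 y < betaf a c b3 x.
Proof.
  intros [Hc [Hu0 Hk]] Hx Hxy Hy.
  apply decr_exc with (e := 0) (f' := fun u => QQ a c*(QQ a c-1)*(QQ a c-PP a)*u^c/(PP a*(PP a-1)) * (kf a c u - b3)); auto.
  - intros w Hw. apply der_beta. lra.
  - intros w Hw _. assert (kf a c w < b3) by (rewrite <- Hk; apply k_lt; auto; lra).
    pose proof (betaC_pos a c w ltac:(lra)). nra.
Qed.

Lemma beta_inc a c b3 u0 x y : Hyp a c b3 u0 -> u0 <= x -> x < y -> y < 1 ->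
  betaf a c b3 x < betaf a c b3 y.
Proof.
  intros [Hc [Hu0 Hk]] Hx Hxy Hy.
  apply incr_exc with (e := 0) (f' := fun u => QQ a c*(QQ a c-1)*(QQ a c-PP a)*u^c/(PP a*(PP a-1)) * (kf a c u - b3)); auto.
  - intros w Hw. apply der_beta. lra.
  - intros w Hw _. assert (b3 < kf a c w).
    { rewrite <- Hk. destruct (Rle_lt_or_eq_dec u0 w ltac:(lra)) as [H|H].
      apply k_lt; auto; lra. subst; lra. }
    pose proof (betaC_pos a c w ltac:(lra)). nra.
Qed.

Lemma beta_lb a c b3 u m : 0 < u < 1 -> 0 < m -> (u <= m \/ 1 - u <= m) ->
  /(PP a*(PP a-1)) * (/(2*m) - QQ a c*(QQ a c-1)*Rabs b3) <= betaf a c b3 u.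
Proof.
  intros Hu Hm Hor. pose proof (PP_ge a). pose proof (QQ_ge a c).
  unfold betaf. apply Rmult_le_compat_l. left; pos.
  assert (0 < u ^ S a) by (apply pow_lt; lra).
  assert (u ^ S a <= u) by (apply pow_le_self; lra).
  assert (u ^ S a <= 1) by (apply pow_le1; lra).
  assert (Hw : /(2*m) <= /(2*u^(S a)*(1-u))).
  { apply Rinv_le_contravar. pos. destruct Hor; nra. }
  assert (QQ a c*(QQ a c-1)*b3*u^(S c) <= QQ a c*(QQ a c-1)*Rabs b3).
  { assert (0 <= u^(S c) <= 1) by (apply pow_le1; lra).
    assert (0 < QQ a c*(QQ a c-1)) by pos.
    pose proof (Rle_abs b3). pose proof (Rabs_pos b3).
    rewrite Rmult_assoc. apply Rmult_le_compat_l. lra. nra. }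
  lra.
Qed.

Lemma beta_big a c b3 M : exists m, 0 < m /\ forall u, 0 < u < 1 -> (u <= m \/ 1 - u <= m) -> M < betaf a c b3 u.
Proof.
  pose proof (PP_ge a). pose proof (QQ_ge a c).
  set (K := PP a*(PP a-1)*Rabs M + QQ a c*(QQ a c-1)*Rabs b3 + 1).
  assert (HK : 0 < K). { unfold K. pose proof (Rabs_pos M). pose proof (Rabs_pos b3).
    assert (0 <= PP a*(PP a-1)*Rabs M) by (apply Rmult_le_pos; nra).
    assert (0 <= QQ a c*(QQ a c-1)*Rabs b3) by (apply Rmult_le_pos; nra). lra. }
  exists (/(2*K)). split. pos. intros u Hu Hor.
  eapply Rlt_le_trans; [|apply (beta_lb a c b3 u (/(2*K))); auto; pos].
  replace (/ (2 * / (2 * K))) with K by (field; lra). unfold K.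
  replace (PP a * (PP a - 1) * Rabs M + QQ a c * (QQ a c - 1) * Rabs b3 + 1 - QQ a c * (QQ a c - 1) * Rabs b3)
    with (PP a * (PP a - 1) * Rabs M + 1) by ring.
  rewrite Rmult_plus_distr_l, <- Rmult_assoc, Rinv_l, Rmult_1_l by (apply Rgt_not_eq; unfold Rgt; pos).
  pose proof (Rle_abs M). assert (0 < / (PP a * (PP a - 1))) by pos. lra.
Qed.

From Stdlib Require Import FunctionalExtensionality.

Lemma g_diff a c b3 b2 b2' u : gfun a c b3 b2 u - gfun a c b3 b2' u = PP a * u^(S a) * (b2' - b2).
Proof. unfold gfun. ring. Qed.

Lemma g_cont a c b3 b2 u : 0 < u < 1 -> continuity_pt (gfun a c b3 b2) u.
Proof. intros. eapply dcont. apply der_g. auto. Qed.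

Lemma pow_cont n u : continuity_pt (fun y => y ^ n) u.
Proof. eapply dcont. apply derivable_pt_lim_pow. Qed.

Lemma B1_eq a c b3 : B1f a c b3 = fun u => gfun a c b3 0 u - (fun u => PP a * betaf a c b3 u) u * (fun u => u^(S a)) u.
Proof. apply functional_extensionality. intros u. unfold B1f, gfun. ring. Qed.

Lemma B1_cont a c b3 u : 0 < u < 1 -> continuity_pt (B1f a c b3) u.
Proof.
  intros Hu. rewrite B1_eq.
  apply (continuity_pt_minus (gfun a c b3 0) (fun u => (fun u => PP a * betaf a c b3 u) u * (fun u => u^(S a)) u)).
  apply g_cont; auto.
  apply (continuity_pt_mult (fun u => PP a * betaf a c b3 u) (fun u => u^(S a))).
  apply (continuity_pt_scal (betaf a c b3)). apply beta_cont; auto.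
  apply pow_cont.
Qed.

Lemma g_incr a c b3 b2 x y e : 0 < x -> x < y -> y < 1 ->
  (forall w, x < w < y -> w <> e -> b2 < betaf a c b3 w) -> gfun a c b3 b2 x < gfun a c b3 b2 y.
Proof.
  intros Hx Hxy Hy H.
  apply incr_exc with (e := e) (f' := fun u => PP a*(PP a-1)*u^a*(betaf a c b3 u - b2)); auto.
  - intros w Hw. apply der_g. lra.
  - intros w Hw Hne. specialize (H w Hw Hne). pose proof (PP_ge a).
    assert (0 < PP a*(PP a-1)*w^a) by pos. nra.
Qed.

Lemma g_decr a c b3 b2 x y e : 0 < x -> x < y -> y < 1 ->
  (forall w, x < w < y -> w <> e -> betaf a c b3 w < b2) -> gfun a c b3 b2 y < gfun a c b3 b2 x.
Proof.
  intros Hx Hxy Hy H.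
  apply decr_exc with (e := e) (f' := fun u => PP a*(PP a-1)*u^a*(betaf a c b3 u - b2)); auto.
  - intros w Hw. apply der_g. lra.
  - intros w Hw Hne. specialize (H w Hw Hne). pose proof (PP_ge a).
    assert (0 < PP a*(PP a-1)*w^a) by pos. nra.
Qed.

Lemma B1_inc a c b3 u0 x y : Hyp a c b3 u0 -> 0 < x -> x < y -> y <= u0 ->
  B1f a c b3 x < B1f a c b3 y.
Proof.
  intros H Hx Hxy Hy. pose proof H as [_ [Hu0 _]]. unfold B1f.
  assert (gfun a c b3 (betaf a c b3 y) x < gfun a c b3 (betaf a c b3 y) y).
  { apply g_incr with (e := 0); try lra. intros w Hw _. apply (beta_dec a c b3 u0); auto; lra. }
  assert (betaf a c b3 y < betaf a c b3 x) by (apply (beta_dec a c b3 u0); auto).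
  pose proof (g_diff a c b3 (betaf a c b3 x) (betaf a c b3 y) x).
  assert (0 < PP a * x^(S a)) by (pose proof (PP_ge a); pos). nra.
Qed.

Lemma B1_dec a c b3 u0 x y : Hyp a c b3 u0 -> u0 <= x -> x < y -> y < 1 ->
  B1f a c b3 y < B1f a c b3 x.
Proof.
  intros H Hx Hxy Hy. pose proof H as [_ [Hu0 _]]. unfold B1f.
  assert (gfun a c b3 (betaf a c b3 y) y < gfun a c b3 (betaf a c b3 y) x).
  { apply g_decr with (e := 0); try lra. intros w Hw _. apply (beta_inc a c b3 u0); auto; lra. }
  assert (betaf a c b3 x < betaf a c b3 y) by (apply (beta_inc a c b3 u0); auto).
  pose proof (g_diff a c b3 (betaf a c b3 x) (betaf a c b3 y) x).
  assert (0 < PP a * x^(S a)) by (pose proof (PP_ge a); pos). nra.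
Qed.

Lemma bpow_bound b u n : 0 <= u <= 1 -> - Rabs b <= b * u^n <= Rabs b.
Proof.
  intros Hu. pose proof (pow_le1 u n Hu). pose proof (Rle_abs b). pose proof (Rabs_pos b).
  pose proof (Rabs_maj2 b). split; nra.
Qed.

Lemma ln2_lt1 : ln 2 < 1.
Proof. rewrite <- (ln_exp 1). apply ln_increasing. lra.
  pose proof (exp_ineq1 1 ltac:(lra)). lra. Qed.

Lemma ln_half_lb u : /2 <= u -> u < 1 + 1 -> - 1 < ln u.
Proof.
  intros H _. apply Rlt_le_trans with (ln (/2)).
  rewrite ln_Rinv by lra. pose proof ln2_lt1. lra. apply ln_le; lra.
Qed.

Lemma B1_formula a c b3 u : 0 < u < 1 ->
  B1f a c b3 u = /2*(ln u - ln (1-u)) - /(2*(PP a - 1)*(1-u))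
     + b3 * u^(S(S(c+a))) * (QQ a c*(QQ a c-1)/(PP a-1) - QQ a c).
Proof.
  intros Hu. pose proof (PP_ge a). unfold B1f, gfun, betaf. norm. field. nz.
Qed.

Lemma B1_low0 a c b3 x : exists d, 0 < d /\ forall u, 0 < u <= d -> B1f a c b3 u < x.
Proof.
  pose proof (PP_ge a) as HP. pose proof (QQ_ge a c) as HQ.
  set (K3 := Rabs (QQ a c*(QQ a c-1)/(PP a-1) - QQ a c) * Rabs b3).
  destruct (ln_small (2*(x - K3 - 1))) as [d [Hd Hl]].
  exists d. split. lra. intros u Hu.
  rewrite B1_formula by lra. specialize (Hl u Hu).
  assert (- ln (1-u) < 1).
  { assert (-1 < ln (1-u)) by (apply ln_half_lb; lra). lra. }
  assert (0 < /(2*(PP a - 1)*(1-u))) by pos.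
  assert (b3 * u^(S(S(c+a))) * (QQ a c*(QQ a c-1)/(PP a-1) - QQ a c) <= K3).
  { unfold K3. rewrite Rmult_comm. rewrite <- Rmult_assoc.
    apply Rle_trans with (Rabs ((QQ a c * (QQ a c - 1) / (PP a - 1) - QQ a c) * b3)).
    - pose proof (bpow_bound ((QQ a c * (QQ a c - 1) / (PP a - 1) - QQ a c) * b3) u (S (S (c+a))) ltac:(lra)). lra.
    - rewrite Rabs_mult. lra. }
  lra.
Qed.

Lemma B1_low1 a c b3 x : exists d, 0 < d /\ forall u, 1 - d <= u < 1 -> B1f a c b3 u < x.
Proof.
  pose proof (PP_ge a) as HP. pose proof (QQ_ge a c) as HQ.
  set (K3 := Rabs (QQ a c*(QQ a c-1)/(PP a-1) - QQ a c) * Rabs b3).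
  set (lam := /(2*(PP a - 1))).
  assert (Hlam : 0 < lam) by (unfold lam; pos).
  set (C0 := - (1 + ln lam)/2 + K3).
  set (d := Rmin (/2) (lam / (2*(Rabs (C0 - x) + 1)))).
  assert (Hd : 0 < d). { unfold d. pose proof (Rabs_pos (C0 - x)). apply Rmin_glb_lt. lra. unfold Rdiv; pos. }
  exists d. split. auto. intros u Hu.
  set (t := 1 - u).
  assert (Ht : 0 < t <= d) by (unfold t; lra).
  assert (Ht2 : t <= /2) by (pose proof (Rmin_l (/2) (lam / (2*(Rabs (C0 - x) + 1)))); fold d in H; lra).
  assert (Ht3 : t <= lam / (2*(Rabs (C0 - x) + 1))) by (pose proof (Rmin_r (/2) (lam / (2*(Rabs (C0 - x) + 1)))); fold d in H; lra).
  assert (Hut : u = 1 - t) by (unfold t; ring).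
  rewrite B1_formula by lra. fold t.
  assert (ln u <= 0) by (left; apply ln_neg; lra).
  assert (Hl : - ln t <= lam / t - 1 - ln lam).
  { pose proof (ln_le_x1 (lam / t) ltac:(unfold Rdiv; pos)).
    unfold Rdiv in H0. rewrite ln_mult, ln_Rinv in H0 by pos. unfold Rdiv. lra. }
  assert (Heq : /(2*(PP a - 1)*t) = lam / t) by (unfold lam; field; lra).
  assert (b3 * u^(S(S(c+a))) * (QQ a c*(QQ a c-1)/(PP a-1) - QQ a c) <= K3).
  { unfold K3. rewrite Rmult_comm. rewrite <- Rmult_assoc.
    apply Rle_trans with (Rabs ((QQ a c * (QQ a c - 1) / (PP a - 1) - QQ a c) * b3)).
    - pose proof (bpow_bound ((QQ a c * (QQ a c - 1) / (PP a - 1) - QQ a c) * b3) u (S (S (c+a))) ltac:(lra)). lra.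
    - rewrite Rabs_mult. lra. }
  assert (Hbig : Rabs (C0 - x) + 1 <= lam / (2*t)).
  { apply Rmult_le_reg_r with (2*t / lam). unfold Rdiv; pos.
    replace (lam / (2 * t) * (2 * t / lam)) with 1 by (field; lra).
    apply Rmult_le_compat_l with (r := 2*(Rabs (C0 - x) + 1)/lam) in Ht3.
    2: { pose proof (Rabs_pos (C0 - x)). unfold Rdiv. left; pos. }
    replace (2 * (Rabs (C0 - x) + 1) / lam * (lam / (2 * (Rabs (C0 - x) + 1)))) with 1 in Ht3.
    2: { pose proof (Rabs_pos (C0 - x)). field. lra. }
    replace ((Rabs (C0 - x) + 1) * (2 * t / lam)) with (2 * (Rabs (C0 - x) + 1) / lam * t) by (field; lra). lra. }
  assert (lam / t = 2 * (lam / (2*t))) by (field; lra).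
  pose proof (Rle_abs (C0 - x)). unfold C0 in *. lra.
Qed.

Lemma g_low0 a c b3 b2 x : exists d, 0 < d /\ forall u, 0 < u <= d -> gfun a c b3 b2 u < x.
Proof.
  set (K4 := Rabs (QQ a c * b3) + Rabs (PP a * b2)).
  destruct (ln_small (2*(x - K4 - 1))) as [d [Hd Hl]].
  exists d. split. lra. intros u Hu. specialize (Hl u Hu).
  assert (-1 < ln (1-u)) by (apply ln_half_lb; lra).
  pose proof (bpow_bound (QQ a c * b3) u (S (S (c+a))) ltac:(lra)).
  pose proof (bpow_bound (PP a * b2) u (S a) ltac:(lra)).
  unfold gfun. unfold K4 in *. lra.
Qed.

Lemma g_high1 a c b3 b2 x : exists d, 0 < d /\ forall u, 1 - d <= u < 1 -> x < gfun a c b3 b2 u.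
Proof.
  set (K4 := Rabs (QQ a c * b3) + Rabs (PP a * b2)).
  destruct (ln_small (-2*(x + K4 + 1))) as [d [Hd Hl]].
  exists d. split. lra. intros u Hu. specialize (Hl (1-u) ltac:(lra)).
  assert (-1 < ln u) by (apply ln_half_lb; lra).
  pose proof (bpow_bound (QQ a c * b3) u (S (S (c+a))) ltac:(lra)).
  pose proof (bpow_bound (PP a * b2) u (S a) ltac:(lra)).
  unfold gfun. unfold K4 in *. lra.
Qed.

Definition lF a c b3 b1 b2 := lfun (S(S a)) (S(S(S(c+a)))) b3 b1 b2.

Lemma xlnx_pos x : 0 < x -> xlnx x = x * ln x.
Proof. intros H. unfold xlnx. destruct (Rle_dec x 0); lra. Qed.

Lemma lF_eq a c b3 b1 b2 u : 0 < u < 1 -> lF a c b3 b1 b2 u = lt_ a c b3 b1 b2 u.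
Proof. intros H. unfold lF, lfun, lt_. rewrite !xlnx_pos by lra. ring. Qed.

Lemma lF0 a c b3 b1 b2 : lF a c b3 b1 b2 0 = 0.
Proof. unfold lF, lfun, xlnx. destruct (Rle_dec 0 0); [|lra].
  destruct (Rle_dec (1-0) 0). lra. replace (1-0) with 1 by ring. rewrite ln_1. simpl. ring. Qed.

Lemma lF1 a c b3 b1 b2 : lF a c b3 b1 b2 1 = b1 + b2 + b3.
Proof. unfold lF, lfun, xlnx. destruct (Rle_dec (1-1) 0); [|lra].
  destruct (Rle_dec 1 0). lra. rewrite ln_1. rewrite !pow1. ring. Qed.

Lemma bpow_low b v n : 0 <= v <= 1 -> - Rabs b * v <= b * v^(S n).
Proof.
  intros Hv. pose proof (pow_le_self v n Hv). assert (0 <= v^(S n)) by (apply pow_le; lra).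
  pose proof (Rle_abs b). pose proof (Rabs_maj2 b). pose proof (Rabs_pos b). nra.
Qed.

Lemma near0 a c b3 b1 b2 : exists d, 0 < d /\ forall v, 0 < v <= d -> lF a c b3 b1 b2 0 < lF a c b3 b1 b2 v.
Proof.
  set (K := Rabs b1 + Rabs b2 + Rabs b3).
  destruct (ln_small (-2*K - 2)) as [d [Hd Hl]].
  exists d. split. lra. intros v Hv. specialize (Hl v Hv).
  rewrite lF0. rewrite lF_eq by lra. unfold lt_.
  assert (ln (1-v) < 0) by (apply ln_neg; lra).
  assert (0 <= -((1-v)*ln(1-v))) by nra.
  pose proof (bpow_low b2 v (S a) ltac:(lra)).
  pose proof (bpow_low b3 v (S (S (c+a))) ltac:(lra)).
  pose proof (Rle_abs b1). pose proof (Rabs_maj2 b1).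
  assert (- K * v - /2 * (v * ln v) >= v) by (unfold K in *; nra).
  unfold K in *. nra.
Qed.

Lemma bpow_low1 b v n : 0 <= v <= 1 -> - Rabs b * INR n * (1 - v) <= b * (v^n - 1).
Proof.
  intros Hv. pose proof (bern v n Hv). pose proof (pow_le1 v n Hv).
  pose proof (pos_INR n).
  pose proof (Rle_abs b). pose proof (Rabs_maj2 b). pose proof (Rabs_pos b).
  assert (0 <= 1 - v^n) by lra.
  assert (Rabs b * (1 - v^n) <= Rabs b * (INR n * (1-v))) by (apply Rmult_le_compat_l; lra).
  nra.
Qed.

Lemma near1 a c b3 b1 b2 : exists d, 0 < d /\ forall v, 1 - d <= v < 1 -> lF a c b3 b1 b2 1 < lF a c b3 b1 b2 v.
Proof.
  set (K := Rabs b1 + Rabs b2 * INR (S (S a)) + Rabs b3 * INR (S (S (S (c+a))))).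
  destruct (ln_small (-2*K - 2)) as [d [Hd Hl]].
  exists d. split. lra. intros v Hv. specialize (Hl (1-v) ltac:(lra)).
  rewrite lF1. rewrite lF_eq by lra. unfold lt_.
  assert (ln v < 0) by (apply ln_neg; lra).
  assert (0 <= -(v*ln v)) by nra.
  pose proof (bpow_low1 b2 v (S (S a)) ltac:(lra)).
  pose proof (bpow_low1 b3 v (S (S (S (c+a)))) ltac:(lra)).
  pose proof (Rle_abs b1). pose proof (Rabs_maj2 b1).
  assert (- K * (1-v) - /2 * ((1-v) * ln (1-v)) >= (1-v)) by (unfold K in *; nra).
  unfold K in *. nra.
Qed.

Lemma l_incr_in a c b3 b1 b2 x y e : 0 < x -> x < y -> y < 1 ->
  (forall w, x < w < y -> w <> e -> gfun a c b3 b2 w < b1) ->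
  lF a c b3 b1 b2 x < lF a c b3 b1 b2 y.
Proof.
  intros Hx Hxy Hy H. rewrite !lF_eq by lra.
  apply incr_exc with (e := e) (f' := fun u => b1 - gfun a c b3 b2 u); auto.
  - intros w Hw. apply der_l. lra.
  - intros w Hw Hne. specialize (H w Hw Hne). lra.
Qed.

Lemma l_decr_in a c b3 b1 b2 x y e : 0 < x -> x < y -> y < 1 ->
  (forall w, x < w < y -> w <> e -> b1 < gfun a c b3 b2 w) ->
  lF a c b3 b1 b2 y < lF a c b3 b1 b2 x.
Proof.
  intros Hx Hxy Hy H. rewrite !lF_eq by lra.
  apply decr_exc with (e := e) (f' := fun u => b1 - gfun a c b3 b2 u); auto.
  - intros w Hw. apply der_l. lra.
  - intros w Hw Hne. specialize (H w Hw Hne). lra.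
Qed.

Lemma l_incr a c b3 b1 b2 x y e : 0 <= x -> x < y -> y < 1 ->
  (forall w, x < w < y -> w <> e -> gfun a c b3 b2 w < b1) ->
  lF a c b3 b1 b2 x < lF a c b3 b1 b2 y.
Proof.
  intros Hx Hxy Hy H. destruct Hx as [Hx|Hx].
  - apply l_incr_in with e; auto.
  - subst x. destruct (near0 a c b3 b1 b2) as [d [Hd Hn]].
    set (v := Rmin d (y/2)).
    assert (0 < v <= d). { unfold v. split. apply Rmin_glb_lt; lra. apply Rmin_l. }
    assert (v <= y/2) by apply Rmin_r.
    apply Rlt_trans with (lF a c b3 b1 b2 v). apply Hn; auto.
    apply l_incr_in with e; try lra. intros w Hw Hne. apply H; auto; lra.
Qed.

Lemma l_decr a c b3 b1 b2 x y e : 0 < x -> x < y -> y <= 1 ->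
  (forall w, x < w < y -> w <> e -> b1 < gfun a c b3 b2 w) ->
  lF a c b3 b1 b2 y < lF a c b3 b1 b2 x.
Proof.
  intros Hx Hxy Hy H. destruct Hy as [Hy|Hy].
  - apply l_decr_in with e; auto.
  - subst y. destruct (near1 a c b3 b1 b2) as [d [Hd Hn]].
    set (v := Rmax (1-d) ((1+x)/2)).
    assert (1 - d <= v < 1). { unfold v. split. apply Rmax_l. apply Rmax_lub_lt; lra. }
    assert ((1+x)/2 <= v) by apply Rmax_r.
    apply Rlt_trans with (lF a c b3 b1 b2 v). apply Hn; auto.
    apply l_decr_in with e; try lra. intros w Hw Hne. apply H; auto; lra.
Qed.

Lemma l_incr_on a c b3 b1 b2 x y e : 0 <= x -> y < 1 ->
  (forall w, x < w < y -> w <> e -> gfun a c b3 b2 w < b1) ->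
  incr_on (lF a c b3 b1 b2) x y.
Proof. intros Hx Hy H s t Hs Hst Ht. apply l_incr with e; try lra. intros; apply H; auto; lra. Qed.

Lemma l_decr_on a c b3 b1 b2 x y e : 0 < x -> y <= 1 ->
  (forall w, x < w < y -> w <> e -> b1 < gfun a c b3 b2 w) ->
  decr_on (lF a c b3 b1 b2) x y.
Proof. intros Hx Hy H s t Hs Hst Ht. apply l_decr with e; try lra. intros; apply H; auto; lra. Qed.

Lemma ivt_up f x y v : x < y -> (forall w, x <= w <= y -> continuity_pt f w) ->
  f x < v -> v < f y -> exists z, x < z < y /\ f z = v.
Proof.
  intros Hxy Hc H1 H2.
  destruct (IVT_interv (fun u => f u - v) x y) as [z [Hz1 Hz2]]; auto.
  - intros u Hu. apply continuity_pt_minus. auto. apply continuity_pt_const. intros ? ?; auto.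
  - lra. - lra.
  - exists z. split; [split|]; try lra.
    + destruct (Rle_lt_or_eq_dec x z) as [?|E]; try lra. subst; lra.
    + destruct (Rle_lt_or_eq_dec z y) as [?|E]; try lra. subst; lra.
Qed.

Lemma ivt_down f x y v : x < y -> (forall w, x <= w <= y -> continuity_pt f w) ->
  v < f x -> f y < v -> exists z, x < z < y /\ f z = v.
Proof.
  intros Hxy Hc H1 H2.
  destruct (ivt_up (fun u => - f u) x y (-v)) as [z [Hz1 Hz2]]; auto; try lra.
  intros w Hw. apply continuity_pt_opp. auto.
  exists z. split; auto. lra.
Qed.

Lemma beta_gt_c a c b3 u0 w : Hyp a c b3 u0 -> 0 < w < 1 -> w <> u0 ->
  betaf a c b3 u0 < betaf a c b3 w.
Proof.
  intros H Hw Hne. pose proof H as [_ [Hu0 _]].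
  destruct (Rtotal_order w u0) as [E|[E|E]].
  - apply (beta_dec a c b3 u0); auto; lra.
  - contradiction.
  - apply (beta_inc a c b3 u0); auto; lra.
Qed.

Lemma beta_pre a c b3 u0 b2 : Hyp a c b3 u0 -> betaf a c b3 u0 < b2 ->
  exists al ga, 0 < al < u0 /\ u0 < ga < 1 /\ betaf a c b3 al = b2 /\ betaf a c b3 ga = b2.
Proof.
  intros H Hb. pose proof H as [_ [Hu0 _]].
  destruct (beta_big a c b3 b2) as [m [Hm Hbig]].
  set (s := Rmin m (u0/2)).
  assert (Hs : 0 < s <= m). { unfold s. split. apply Rmin_glb_lt; lra. apply Rmin_l. }
  assert (s <= u0/2) by apply Rmin_r.
  set (t := Rmax (1-m) ((1+u0)/2)).
  assert (Ht : 1 - m <= t < 1). { unfold t. split. apply Rmax_l. apply Rmax_lub_lt; lra. }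
  assert ((1+u0)/2 <= t) by apply Rmax_r.
  destruct (ivt_down (betaf a c b3) s u0 b2) as [al [Hal1 Hal2]]; try lra.
  { intros w Hw. apply beta_cont. lra. }
  { apply Hbig; lra. }
  destruct (ivt_up (betaf a c b3) u0 t b2) as [ga [Hga1 Hga2]]; try lra.
  { intros w Hw. apply beta_cont. lra. }
  { apply Hbig; lra. }
  exists al, ga. repeat split; lra.
Qed.

Definition Pre a c b3 u0 b2 al ga := 0 < al < u0 /\ u0 < ga < 1 /\ betaf a c b3 al = b2 /\ betaf a c b3 ga = b2.

Lemma gI1 a c b3 u0 b2 al ga x y : Hyp a c b3 u0 -> Pre a c b3 u0 b2 al ga ->
  0 < x -> x < y -> y <= al -> gfun a c b3 b2 x < gfun a c b3 b2 y.
Proof.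
  intros H [Ha [Hg [Hba Hbg]]] Hx Hxy Hy. apply g_incr with (e := 0); try lra.
  intros w Hw _. rewrite <- Hba. apply (beta_dec a c b3 u0); auto; lra.
Qed.

Lemma gD a c b3 u0 b2 al ga x y : Hyp a c b3 u0 -> Pre a c b3 u0 b2 al ga ->
  al <= x -> x < y -> y <= ga -> gfun a c b3 b2 y < gfun a c b3 b2 x.
Proof.
  intros H [Ha [Hg [Hba Hbg]]] Hx Hxy Hy. apply g_decr with (e := 0); try lra.
  intros w Hw _. destruct (Rle_or_lt w u0).
  - rewrite <- Hba. apply (beta_dec a c b3 u0); auto; lra.
  - rewrite <- Hbg. apply (beta_inc a c b3 u0); auto; lra.
Qed.

Lemma gI2 a c b3 u0 b2 al ga x y : Hyp a c b3 u0 -> Pre a c b3 u0 b2 al ga ->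
  ga <= x -> x < y -> y < 1 -> gfun a c b3 b2 x < gfun a c b3 b2 y.
Proof.
  intros H [Ha [Hg [Hba Hbg]]] Hx Hxy Hy. apply g_incr with (e := 0); try lra.
  intros w Hw _. rewrite <- Hbg. apply (beta_inc a c b3 u0); auto; lra.
Qed.

Lemma gA_B1 a c b3 u0 b2 al ga : Pre a c b3 u0 b2 al ga ->
  gfun a c b3 b2 al = B1f a c b3 al /\ gfun a c b3 b2 ga = B1f a c b3 ga.
Proof. intros [_ [_ [Hba Hbg]]]. unfold B1f. rewrite Hba, Hbg. auto. Qed.

Lemma g_pt_low a c b3 b2 v z : 0 < z -> exists s, 0 < s < z /\ s < 1/2 /\ gfun a c b3 b2 s < v.
Proof.
  intros Hz. destruct (g_low0 a c b3 b2 v) as [d [Hd Hl]].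
  exists (Rmin d (Rmin (z/2) (1/4))).
  assert (Rmin d (Rmin (z/2) (1/4)) <= d) by apply Rmin_l.
  assert (Rmin d (Rmin (z/2) (1/4)) <= Rmin (z/2) (1/4)) by apply Rmin_r.
  assert (Rmin (z/2) (1/4) <= z/2) by apply Rmin_l.
  assert (Rmin (z/2) (1/4) <= 1/4) by apply Rmin_r.
  assert (0 < Rmin d (Rmin (z/2) (1/4))) by (repeat apply Rmin_glb_lt; lra).
  split; [|split]; try lra. apply Hl. lra.
Qed.

Lemma g_pt_high a c b3 b2 v z : z < 1 -> exists t, z < t < 1 /\ 1/2 < t /\ v < gfun a c b3 b2 t.
Proof.
  intros Hz. destruct (g_high1 a c b3 b2 v) as [d [Hd Hl]].
  set (t := Rmax (1-d) (Rmax ((1+z)/2) (3/4))).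
  assert (1-d <= t) by apply Rmax_l.
  assert (Rmax ((1+z)/2) (3/4) <= t) by apply Rmax_r.
  assert ((1+z)/2 <= Rmax ((1+z)/2) (3/4)) by apply Rmax_l.
  assert (3/4 <= Rmax ((1+z)/2) (3/4)) by apply Rmax_r.
  assert (t < 1) by (unfold t; repeat apply Rmax_lub_lt; lra).
  exists t. split; [|split]; try lra. apply Hl. lra.
Qed.

Definition Uni (f : R -> R) u := 0 < u < 1 /\ incr_on f 0 u /\ decr_on f u 1.
Definition Bi (f : R -> R) u1 m u2 := 0 < u1 < m /\ m < u2 < 1 /\ incr_on f 0 u1 /\
  decr_on f u1 m /\ incr_on f m u2 /\ decr_on f u2 1.

Lemma gc_on a c b3 b2 x y : 0 < x -> y < 1 -> forall w, x <= w <= y -> continuity_pt (gfun a c b3 b2) w.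
Proof. intros. apply g_cont. lra. Qed.

Lemma shapeA a c b3 u0 b1 b2 : Hyp a c b3 u0 -> b2 <= betaf a c b3 u0 ->
  exists u, Uni (lF a c b3 b1 b2) u.
Proof.
  intros H Hb. pose proof H as [_ [Hu0 _]].
  assert (gs : forall x y, 0 < x -> x < y -> y < 1 -> gfun a c b3 b2 x < gfun a c b3 b2 y).
  { intros x y Hx Hxy Hy. apply g_incr with (e := u0); auto.
    intros w Hw Hne. pose proof (beta_gt_c a c b3 u0 w H ltac:(lra) Hne). lra. }
  destruct (g_pt_low a c b3 b2 b1 (1/2)) as [s [Hs1 [Hs2 Hs3]]]; [lra|].
  destruct (g_pt_high a c b3 b2 b1 (1/2)) as [t [Ht1 [Ht2 Ht3]]]; [lra|].
  destruct (ivt_up (gfun a c b3 b2) s t b1) as [u [Hu1 Hu2]]; try lra.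
  { apply gc_on; lra. }
  exists u. split; [lra|split].
  - apply l_incr_on with (e := 0); try lra. intros w Hw _. rewrite <- Hu2. apply gs; lra.
  - apply l_decr_on with (e := 0); try lra. intros w Hw _. rewrite <- Hu2. apply gs; lra.
Qed.

Lemma shapeB1 a c b3 u0 b1 b2 al ga : Hyp a c b3 u0 -> Pre a c b3 u0 b2 al ga ->
  B1f a c b3 al <= b1 -> exists u, ga < u < 1 /\ Uni (lF a c b3 b1 b2) u.
Proof.
  intros H HP Hb. pose proof HP as [Ha [Hg _]]. pose proof H as [_ [Hu0 _]].
  destruct (gA_B1 a c b3 u0 b2 al ga HP) as [E1 E2]. rewrite <- E1 in Hb.
  assert (gfun a c b3 b2 ga < gfun a c b3 b2 al) by (apply (gD a c b3 u0 b2 al ga); auto; lra).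
  destruct (g_pt_high a c b3 b2 b1 ga) as [t [Ht1 [Ht2 Ht3]]]; [lra|].
  destruct (ivt_up (gfun a c b3 b2) ga t b1) as [u [Hu1 Hu2]]; try lra.
  { apply gc_on; lra. }
  exists u. split. lra. split; [lra|split].
  - apply l_incr_on with (e := al); try lra. intros w Hw Hne.
    destruct (Rtotal_order w al) as [E|[E|E]]; [|contradiction|].
    + pose proof (gI1 a c b3 u0 b2 al ga w al H HP ltac:(lra) E ltac:(lra)). lra.
    + destruct (Rle_or_lt w ga).
      * pose proof (gD a c b3 u0 b2 al ga al w H HP ltac:(lra) E ltac:(lra)). lra.
      * pose proof (gI2 a c b3 u0 b2 al ga w u H HP ltac:(lra) ltac:(lra) ltac:(lra)). lra.
  - apply l_decr_on with (e := 0); try lra. intros w Hw _. rewrite <- Hu2.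
    apply (gI2 a c b3 u0 b2 al ga); auto; lra.
Qed.

Lemma shapeB2 a c b3 u0 b1 b2 al ga : Hyp a c b3 u0 -> Pre a c b3 u0 b2 al ga ->
  b1 <= B1f a c b3 ga -> exists u, 0 < u < al /\ Uni (lF a c b3 b1 b2) u.
Proof.
  intros H HP Hb. pose proof HP as [Ha [Hg _]]. pose proof H as [_ [Hu0 _]].
  destruct (gA_B1 a c b3 u0 b2 al ga HP) as [E1 E2]. rewrite <- E2 in Hb.
  assert (gfun a c b3 b2 ga < gfun a c b3 b2 al) by (apply (gD a c b3 u0 b2 al ga); auto; lra).
  destruct (g_pt_low a c b3 b2 b1 al) as [s [Hs1 [Hs2 Hs3]]]; [lra|].
  destruct (ivt_up (gfun a c b3 b2) s al b1) as [u [Hu1 Hu2]]; try lra.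
  { apply gc_on; lra. }
  exists u. split. lra. split; [lra|split].
  - apply l_incr_on with (e := 0); try lra. intros w Hw _. rewrite <- Hu2.
    apply (gI1 a c b3 u0 b2 al ga); auto; lra.
  - apply l_decr_on with (e := ga); try lra. intros w Hw Hne.
    destruct (Rle_or_lt w al).
    + rewrite <- Hu2. apply (gI1 a c b3 u0 b2 al ga); auto; lra.
    + destruct (Rtotal_order w ga) as [E|[E|E]]; [|contradiction|].
      * pose proof (gD a c b3 u0 b2 al ga w ga H HP ltac:(lra) E ltac:(lra)). lra.
      * pose proof (gI2 a c b3 u0 b2 al ga ga w H HP ltac:(lra) E ltac:(lra)). lra.
Qed.

Lemma shapeB3 a c b3 u0 b1 b2 al ga : Hyp a c b3 u0 -> Pre a c b3 u0 b2 al ga ->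
  B1f a c b3 ga < b1 -> b1 < B1f a c b3 al ->
  exists u1 m u2, u1 < al /\ ga < u2 /\ Bi (lF a c b3 b1 b2) u1 m u2.
Proof.
  intros H HP Hb1 Hb2. pose proof HP as [Ha [Hg _]]. pose proof H as [_ [Hu0 _]].
  destruct (gA_B1 a c b3 u0 b2 al ga HP) as [E1 E2]. rewrite <- E1 in Hb2. rewrite <- E2 in Hb1.
  destruct (g_pt_low a c b3 b2 b1 al) as [s [Hs1 [Hs2 Hs3]]]; [lra|].
  destruct (g_pt_high a c b3 b2 b1 ga) as [t [Ht1 [Ht2 Ht3]]]; [lra|].
  destruct (ivt_up (gfun a c b3 b2) s al b1) as [u1 [Hu1 Hu1']]; try lra.
  { apply gc_on; lra. }
  destruct (ivt_down (gfun a c b3 b2) al ga b1) as [m [Hm Hm']]; try lra.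
  { apply gc_on; lra. }
  destruct (ivt_up (gfun a c b3 b2) ga t b1) as [u2 [Hu2 Hu2']]; try lra.
  { apply gc_on; lra. }
  exists u1, m, u2. split. lra. split. lra.
  split; [lra|split; [lra|split; [|split; [|split]]]].
  - apply l_incr_on with (e := 0); try lra. intros w Hw _. rewrite <- Hu1'.
    apply (gI1 a c b3 u0 b2 al ga); auto; lra.
  - apply l_decr_on with (e := 0); try lra. intros w Hw _.
    destruct (Rle_or_lt w al).
    + rewrite <- Hu1'. apply (gI1 a c b3 u0 b2 al ga); auto; lra.
    + rewrite <- Hm'. apply (gD a c b3 u0 b2 al ga); auto; lra.
  - apply l_incr_on with (e := 0); try lra. intros w Hw _.
    destruct (Rle_or_lt w ga).
    + rewrite <- Hm'. apply (gD a c b3 u0 b2 al ga); auto; lra.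
    + rewrite <- Hu2'. apply (gI2 a c b3 u0 b2 al ga); auto; lra.
  - apply l_decr_on with (e := 0); try lra. intros w Hw _. rewrite <- Hu2'.
    apply (gI2 a c b3 u0 b2 al ga); auto; lra.
Qed.

Definition aF a c b3 u0 x := epsilon (inhabits 0) (fun s => 0 < s < u0 /\ B1f a c b3 s = x).
Definition cF a c b3 u0 x := epsilon (inhabits 0) (fun s => u0 < s < 1 /\ B1f a c b3 s = x).
Definition UF a c b3 u0 x := betaf a c b3 (aF a c b3 u0 x).
Definition LF a c b3 u0 x := betaf a c b3 (cF a c b3 u0 x).

Lemma aF_spec a c b3 u0 x : Hyp a c b3 u0 -> x < B1f a c b3 u0 ->
  0 < aF a c b3 u0 x < u0 /\ B1f a c b3 (aF a c b3 u0 x) = x.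
Proof.
  intros H Hx. pose proof H as [_ [Hu0 _]]. unfold aF. apply epsilon_spec.
  destruct (B1_low0 a c b3 x) as [d [Hd Hl]].
  set (s := Rmin d (u0/2)).
  assert (0 < s <= d). { unfold s. split. apply Rmin_glb_lt; lra. apply Rmin_l. }
  assert (s <= u0/2) by apply Rmin_r.
  destruct (ivt_up (B1f a c b3) s u0 x) as [z [Hz1 Hz2]]; try lra.
  - intros w Hw. apply B1_cont. lra.
  - apply Hl. lra.
  - exists z. split. lra. auto.
Qed.

Lemma cF_spec a c b3 u0 x : Hyp a c b3 u0 -> x < B1f a c b3 u0 ->
  u0 < cF a c b3 u0 x < 1 /\ B1f a c b3 (cF a c b3 u0 x) = x.
Proof.
  intros H Hx. pose proof H as [_ [Hu0 _]]. unfold cF. apply epsilon_spec.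
  destruct (B1_low1 a c b3 x) as [d [Hd Hl]].
  set (t := Rmax (1-d) ((1+u0)/2)).
  assert (1 - d <= t < 1). { unfold t. split. apply Rmax_l. apply Rmax_lub_lt; lra. }
  assert ((1+u0)/2 <= t) by apply Rmax_r.
  destruct (ivt_down (B1f a c b3) u0 t x) as [z [Hz1 Hz2]]; try lra.
  - intros w Hw. apply B1_cont. lra.
  - apply Hl. lra.
  - exists z. split. lra. auto.
Qed.

Lemma B1_inc_le a c b3 u0 x y : Hyp a c b3 u0 -> 0 < x -> x <= y -> y <= u0 ->
  B1f a c b3 x <= B1f a c b3 y.
Proof. intros H Hx [E|E] Hy. left; apply (B1_inc a c b3 u0); auto. subst; lra. Qed.
Lemma B1_dec_le a c b3 u0 x y : Hyp a c b3 u0 -> u0 <= x -> x <= y -> y < 1 ->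
  B1f a c b3 y <= B1f a c b3 x.
Proof. intros H Hx [E|E] Hy. left; apply (B1_dec a c b3 u0); auto. subst; lra. Qed.

Lemma B1_inc_rev a c b3 u0 x y : Hyp a c b3 u0 -> 0 < x <= u0 -> 0 < y <= u0 ->
  B1f a c b3 x < B1f a c b3 y -> x < y.
Proof.
  intros H Hx Hy Hl. destruct (Rlt_or_le x y) as [E|E]; auto.
  pose proof (B1_inc_le a c b3 u0 y x H ltac:(lra) E ltac:(lra)). lra.
Qed.
Lemma B1_dec_rev a c b3 u0 x y : Hyp a c b3 u0 -> u0 <= x < 1 -> u0 <= y < 1 ->
  B1f a c b3 x < B1f a c b3 y -> y < x.
Proof.
  intros H Hx Hy Hl. destruct (Rlt_or_le y x) as [E|E]; auto.
  pose proof (B1_dec_le a c b3 u0 x y H ltac:(lra) E ltac:(lra)). lra.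
Qed.
Lemma beta_dec_le a c b3 u0 x y : Hyp a c b3 u0 -> 0 < x -> x <= y -> y <= u0 ->
  betaf a c b3 y <= betaf a c b3 x.
Proof. intros H Hx [E|E] Hy. left; apply (beta_dec a c b3 u0); auto. subst; lra. Qed.
Lemma beta_inc_le a c b3 u0 x y : Hyp a c b3 u0 -> u0 <= x -> x <= y -> y < 1 ->
  betaf a c b3 x <= betaf a c b3 y.
Proof. intros H Hx [E|E] Hy. left; apply (beta_inc a c b3 u0); auto. subst; lra. Qed.
Lemma beta_dec_rev a c b3 u0 x y : Hyp a c b3 u0 -> 0 < x <= u0 -> 0 < y <= u0 ->
  betaf a c b3 y < betaf a c b3 x -> x < y.
Proof.
  intros H Hx Hy Hl. destruct (Rlt_or_le x y) as [E|E]; auto.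
  pose proof (beta_dec_le a c b3 u0 y x H ltac:(lra) E ltac:(lra)). lra.
Qed.
Lemma beta_inc_rev a c b3 u0 x y : Hyp a c b3 u0 -> u0 <= x < 1 -> u0 <= y < 1 ->
  betaf a c b3 x < betaf a c b3 y -> x < y.
Proof.
  intros H Hx Hy Hl. destruct (Rlt_or_le x y) as [E|E]; auto.
  pose proof (beta_inc_le a c b3 u0 y x H ltac:(lra) E ltac:(lra)). lra.
Qed.

Lemma aF_cont a c b3 u0 x : Hyp a c b3 u0 -> x < B1f a c b3 u0 -> continuity_pt (aF a c b3 u0) x.
Proof.
  intros H Hx. pose proof H as [_ [Hu0 _]].
  destruct (aF_spec a c b3 u0 x H Hx) as [Hs Hbs].
  set (s := aF a c b3 u0 x) in *.
  unfold continuity_pt, continue_in, limit1_in, limit_in. simpl. unfold R_dist.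
  intros eps Heps.
  set (e := Rmin (eps/2) (Rmin (s/2) ((u0-s)/2))).
  assert (He1 : e <= eps/2) by apply Rmin_l.
  assert (He2 : e <= s/2) by (pose proof (Rmin_r (eps/2) (Rmin (s/2) ((u0-s)/2))); pose proof (Rmin_l (s/2) ((u0-s)/2)); fold e in H0; lra).
  assert (He3 : e <= (u0-s)/2) by (pose proof (Rmin_r (eps/2) (Rmin (s/2) ((u0-s)/2))); pose proof (Rmin_r (s/2) ((u0-s)/2)); fold e in H0; lra).
  assert (He0 : 0 < e) by (unfold e; repeat apply Rmin_glb_lt; lra).
  assert (B1 : B1f a c b3 (s-e) < x) by (rewrite <- Hbs; apply (B1_inc a c b3 u0); auto; lra).
  assert (B2 : x < B1f a c b3 (s+e)) by (rewrite <- Hbs; apply (B1_inc a c b3 u0); auto; lra).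
  assert (B3 : B1f a c b3 (s+e) < B1f a c b3 u0) by (apply (B1_inc a c b3 u0); auto; lra).
  exists (Rmin (x - B1f a c b3 (s-e)) (B1f a c b3 (s+e) - x)). split.
  { apply Rmin_glb_lt; lra. }
  intros y [_ Hy].
  assert (Hy1 : Rabs (y - x) < x - B1f a c b3 (s-e)) by (eapply Rlt_le_trans; [exact Hy| apply Rmin_l]).
  assert (Hy2 : Rabs (y - x) < B1f a c b3 (s+e) - x) by (eapply Rlt_le_trans; [exact Hy| apply Rmin_r]).
  apply Rabs_def2 in Hy1. apply Rabs_def2 in Hy2.
  destruct (aF_spec a c b3 u0 y H ltac:(lra)) as [Hs' Hbs'].
  assert (s - e < aF a c b3 u0 y) by (apply (B1_inc_rev a c b3 u0); auto; lra).
  assert (aF a c b3 u0 y < s + e) by (apply (B1_inc_rev a c b3 u0); auto; lra).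
  change (aF a c b3 u0 x) with s. apply Rabs_def1; lra.
Qed.

Lemma cF_cont a c b3 u0 x : Hyp a c b3 u0 -> x < B1f a c b3 u0 -> continuity_pt (cF a c b3 u0) x.
Proof.
  intros H Hx. pose proof H as [_ [Hu0 _]].
  destruct (cF_spec a c b3 u0 x H Hx) as [Hs Hbs].
  set (s := cF a c b3 u0 x) in *.
  unfold continuity_pt, continue_in, limit1_in, limit_in. simpl. unfold R_dist.
  intros eps Heps.
  set (e := Rmin (eps/2) (Rmin ((s-u0)/2) ((1-s)/2))).
  assert (He1 : e <= eps/2) by apply Rmin_l.
  assert (He2 : e <= (s-u0)/2) by (pose proof (Rmin_r (eps/2) (Rmin ((s-u0)/2) ((1-s)/2))); pose proof (Rmin_l ((s-u0)/2) ((1-s)/2)); fold e in H0; lra).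
  assert (He3 : e <= (1-s)/2) by (pose proof (Rmin_r (eps/2) (Rmin ((s-u0)/2) ((1-s)/2))); pose proof (Rmin_r ((s-u0)/2) ((1-s)/2)); fold e in H0; lra).
  assert (He0 : 0 < e) by (unfold e; repeat apply Rmin_glb_lt; lra).
  assert (B1 : B1f a c b3 (s+e) < x) by (rewrite <- Hbs; apply (B1_dec a c b3 u0); auto; lra).
  assert (B2 : x < B1f a c b3 (s-e)) by (rewrite <- Hbs; apply (B1_dec a c b3 u0); auto; lra).
  assert (B3 : B1f a c b3 (s-e) < B1f a c b3 u0) by (apply (B1_dec a c b3 u0); auto; lra).
  exists (Rmin (x - B1f a c b3 (s+e)) (B1f a c b3 (s-e) - x)). split.
  { apply Rmin_glb_lt; lra. }
  intros y [_ Hy].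
  assert (Hy1 : Rabs (y - x) < x - B1f a c b3 (s+e)) by (eapply Rlt_le_trans; [exact Hy| apply Rmin_l]).
  assert (Hy2 : Rabs (y - x) < B1f a c b3 (s-e) - x) by (eapply Rlt_le_trans; [exact Hy| apply Rmin_r]).
  apply Rabs_def2 in Hy1. apply Rabs_def2 in Hy2.
  destruct (cF_spec a c b3 u0 y H ltac:(lra)) as [Hs' Hbs'].
  assert (s - e < cF a c b3 u0 y) by (apply (B1_dec_rev a c b3 u0); auto; lra).
  assert (cF a c b3 u0 y < s + e) by (apply (B1_dec_rev a c b3 u0); auto; lra).
  change (cF a c b3 u0 x) with s. apply Rabs_def1; lra.
Qed.

Lemma UL_cont a c b3 u0 x : Hyp a c b3 u0 -> x < B1f a c b3 u0 ->
  continuity_pt (LF a c b3 u0) x /\ continuity_pt (UF a c b3 u0) x.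
Proof.
  intros H Hx. split.
  - apply (continuity_pt_comp (cF a c b3 u0) (betaf a c b3)). apply cF_cont; auto.
    apply beta_cont. destruct (cF_spec a c b3 u0 x H Hx) as [? _]. pose proof H as [_ [? _]]. lra.
  - apply (continuity_pt_comp (aF a c b3 u0) (betaf a c b3)). apply aF_cont; auto.
    apply beta_cont. destruct (aF_spec a c b3 u0 x H Hx) as [? _]. pose proof H as [_ [? _]]. lra.
Qed.

Lemma UL_decr a c b3 u0 x y : Hyp a c b3 u0 -> x < y -> y < B1f a c b3 u0 ->
  LF a c b3 u0 y < LF a c b3 u0 x /\ UF a c b3 u0 y < UF a c b3 u0 x.
Proof.
  intros H Hxy Hy. pose proof H as [_ [Hu0 _]].
  destruct (aF_spec a c b3 u0 x H ltac:(lra)) as [Ax Bx].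
  destruct (aF_spec a c b3 u0 y H ltac:(lra)) as [Ay By].
  destruct (cF_spec a c b3 u0 x H ltac:(lra)) as [Cx Dx].
  destruct (cF_spec a c b3 u0 y H ltac:(lra)) as [Cy Dy].
  unfold LF, UF. split.
  - apply (beta_inc a c b3 u0); auto; try lra.
    apply (B1_dec_rev a c b3 u0); auto; lra.
  - apply (beta_dec a c b3 u0); auto; try lra.
    apply (B1_inc_rev a c b3 u0); auto; lra.
Qed.

Lemma beta_inj_left a c b3 u0 x y : Hyp a c b3 u0 -> 0 < x <= u0 -> 0 < y <= u0 ->
  betaf a c b3 x = betaf a c b3 y -> x = y.
Proof.
  intros H Hx Hy E. destruct (Rtotal_order x y) as [L|[L|L]]; auto.
  - pose proof (beta_dec a c b3 u0 x y H ltac:(lra) L ltac:(lra)). lra.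
  - pose proof (beta_dec a c b3 u0 y x H ltac:(lra) L ltac:(lra)). lra.
Qed.

Lemma UL_lt a c b3 u0 x : Hyp a c b3 u0 -> x < B1f a c b3 u0 -> LF a c b3 u0 x < UF a c b3 u0 x.
Proof.
  intros H Hx. pose proof H as [_ [Hu0 _]].
  destruct (aF_spec a c b3 u0 x H Hx) as [As Bs].
  destruct (cF_spec a c b3 u0 x H Hx) as [Ct Dt].
  set (s := aF a c b3 u0 x) in *. set (t := cF a c b3 u0 x) in *.
  assert (Hb : betaf a c b3 u0 < betaf a c b3 s) by (apply (beta_dec a c b3 u0); auto; lra).
  destruct (beta_pre a c b3 u0 (betaf a c b3 s) H Hb) as [al [ga HP]].
  pose proof HP as [Ha [Hg [Hba Hbg]]].
  assert (al = s) by (apply (beta_inj_left a c b3 u0); auto; lra). subst al.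
  destruct (gA_B1 a c b3 u0 _ s ga HP) as [E1 E2].
  assert (gfun a c b3 (betaf a c b3 s) ga < gfun a c b3 (betaf a c b3 s) s)
    by (apply (gD a c b3 u0 _ s ga); auto; lra).
  assert (t < ga) by (apply (B1_dec_rev a c b3 u0); auto; lra).
  unfold LF, UF. fold s t. rewrite <- Hbg. apply (beta_inc a c b3 u0); auto; lra.
Qed.

Lemma cont_eps f x : continuity_pt f x -> forall eps, 0 < eps ->
  exists d, 0 < d /\ forall y, Rabs (y - x) < d -> Rabs (f y - f x) < eps.
Proof.
  intros Hc eps He. unfold continuity_pt, continue_in, limit1_in, limit_in in Hc.
  destruct (Hc eps He) as [d [Hd Hy]]. exists d. split; auto. intros y Hyx.
  destruct (Req_dec y x) as [E|E]. subst. rewrite Rminus_diag, Rabs_R0. auto.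
  apply (Hy y). split. split. exact I. auto. auto.
Qed.

Lemma UL_corner a c b3 u0 : Hyp a c b3 u0 -> forall eps, 0 < eps -> exists d, 0 < d /\
  forall x, B1f a c b3 u0 - d < x < B1f a c b3 u0 ->
  Rabs (LF a c b3 u0 x - betaf a c b3 u0) < eps /\ Rabs (UF a c b3 u0 x - betaf a c b3 u0) < eps.
Proof.
  intros H eps He. pose proof H as [_ [Hu0 _]].
  destruct (cont_eps _ _ (beta_cont a c b3 u0 Hu0) eps He) as [d1 [Hd1 Hc]].
  set (s := Rmax (u0 - d1/2) (u0/2)). set (t := Rmin (u0 + d1/2) ((1+u0)/2)).
  assert (u0 - d1/2 <= s) by apply Rmax_l. assert (u0/2 <= s) by apply Rmax_r.
  assert (s < u0) by (apply Rmax_lub_lt; lra).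
  assert (t <= u0 + d1/2) by apply Rmin_l. assert (t <= (1+u0)/2) by apply Rmin_r.
  assert (u0 < t) by (apply Rmin_glb_lt; lra).
  assert (Bs : B1f a c b3 s < B1f a c b3 u0) by (apply (B1_inc a c b3 u0); auto; lra).
  assert (Bt : B1f a c b3 t < B1f a c b3 u0) by (apply (B1_dec a c b3 u0); auto; lra).
  exists (Rmin (B1f a c b3 u0 - B1f a c b3 s) (B1f a c b3 u0 - B1f a c b3 t)). split.
  { apply Rmin_glb_lt; lra. }
  intros x [Hx1 Hx2].
  assert (x > B1f a c b3 s) by (pose proof (Rmin_l (B1f a c b3 u0 - B1f a c b3 s) (B1f a c b3 u0 - B1f a c b3 t)); lra).
  assert (x > B1f a c b3 t) by (pose proof (Rmin_r (B1f a c b3 u0 - B1f a c b3 s) (B1f a c b3 u0 - B1f a c b3 t)); lra).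
  destruct (aF_spec a c b3 u0 x H Hx2) as [As Bs'].
  destruct (cF_spec a c b3 u0 x H Hx2) as [Ct Dt].
  assert (s < aF a c b3 u0 x) by (apply (B1_inc_rev a c b3 u0); auto; lra).
  assert (cF a c b3 u0 x < t) by (apply (B1_dec_rev a c b3 u0); auto; lra).
  unfold LF, UF. split; apply Hc; apply Rabs_def1; lra.
Qed.

Lemma UL_inf a c b3 u0 : Hyp a c b3 u0 -> forall M, exists N, forall x, x < N -> x < B1f a c b3 u0 ->
  M < LF a c b3 u0 x /\ M < UF a c b3 u0 x.
Proof.
  intros H M. pose proof H as [_ [Hu0 _]].
  destruct (beta_big a c b3 M) as [m [Hm Hbig]].
  set (s := Rmin m (u0/2)). set (t := Rmax (1-m) ((1+u0)/2)).
  assert (s <= m) by apply Rmin_l. assert (s <= u0/2) by apply Rmin_r.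
  assert (0 < s) by (apply Rmin_glb_lt; lra).
  assert (1-m <= t) by apply Rmax_l. assert ((1+u0)/2 <= t) by apply Rmax_r.
  assert (t < 1) by (apply Rmax_lub_lt; lra).
  exists (Rmin (B1f a c b3 s) (B1f a c b3 t)). intros x Hx Hx2.
  assert (x < B1f a c b3 s) by (pose proof (Rmin_l (B1f a c b3 s) (B1f a c b3 t)); lra).
  assert (x < B1f a c b3 t) by (pose proof (Rmin_r (B1f a c b3 s) (B1f a c b3 t)); lra).
  destruct (aF_spec a c b3 u0 x H Hx2) as [As Bs'].
  destruct (cF_spec a c b3 u0 x H Hx2) as [Ct Dt].
  assert (aF a c b3 u0 x < s) by (apply (B1_inc_rev a c b3 u0); auto; lra).
  assert (t < cF a c b3 u0 x) by (apply (B1_dec_rev a c b3 u0); auto; lra).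
  assert (M < betaf a c b3 s) by (apply Hbig; lra).
  assert (M < betaf a c b3 t) by (apply Hbig; lra).
  unfold LF, UF. split.
  - pose proof (beta_inc a c b3 u0 t (cF a c b3 u0 x) H ltac:(lra) ltac:(lra) ltac:(lra)). lra.
  - pose proof (beta_dec a c b3 u0 (aF a c b3 u0 x) s H ltac:(lra) ltac:(lra) ltac:(lra)). lra.
Qed.

Definition Vr a c b3 u0 b1 b2 := b1 < B1f a c b3 u0 /\ LF a c b3 u0 b1 < b2 < UF a c b3 u0 b1.

Lemma V_iff a c b3 u0 b1 b2 al ga : Hyp a c b3 u0 -> Pre a c b3 u0 b2 al ga ->
  (Vr a c b3 u0 b1 b2 <-> B1f a c b3 ga < b1 < B1f a c b3 al).
Proof.
  intros H HP. pose proof HP as [Ha [Hg [Hba Hbg]]]. pose proof H as [_ [Hu0 _]].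
  unfold Vr, LF, UF. split.
  - intros [Hb [HL HU]].
    destruct (aF_spec a c b3 u0 b1 H Hb) as [As Bs].
    destruct (cF_spec a c b3 u0 b1 H Hb) as [Ct Dt].
    assert (aF a c b3 u0 b1 < al) by (apply (beta_dec_rev a c b3 u0); auto; lra).
    assert (cF a c b3 u0 b1 < ga) by (apply (beta_inc_rev a c b3 u0); auto; lra).
    pose proof (B1_inc a c b3 u0 (aF a c b3 u0 b1) al H ltac:(lra) ltac:(lra) ltac:(lra)).
    pose proof (B1_dec a c b3 u0 (cF a c b3 u0 b1) ga H ltac:(lra) ltac:(lra) ltac:(lra)).
    lra.
  - intros [H1 H2].
    assert (B1f a c b3 al < B1f a c b3 u0) by (apply (B1_inc a c b3 u0); auto; lra).
    assert (Hb : b1 < B1f a c b3 u0) by lra.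
    destruct (aF_spec a c b3 u0 b1 H Hb) as [As Bs].
    destruct (cF_spec a c b3 u0 b1 H Hb) as [Ct Dt].
    assert (aF a c b3 u0 b1 < al) by (apply (B1_inc_rev a c b3 u0); auto; lra).
    assert (cF a c b3 u0 b1 < ga) by (apply (B1_dec_rev a c b3 u0); auto; lra).
    pose proof (beta_dec a c b3 u0 (aF a c b3 u0 b1) al H ltac:(lra) ltac:(lra) ltac:(lra)).
    pose proof (beta_inc a c b3 u0 (cF a c b3 u0 b1) ga H ltac:(lra) ltac:(lra) ltac:(lra)).
    split; [auto|lra].
Qed.

Lemma LF_gt a c b3 u0 b1 : Hyp a c b3 u0 -> b1 < B1f a c b3 u0 -> betaf a c b3 u0 < LF a c b3 u0 b1.
Proof.
  intros H Hb. pose proof H as [_ [Hu0 _]].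
  destruct (cF_spec a c b3 u0 b1 H Hb) as [Ct Dt].
  unfold LF. apply (beta_inc a c b3 u0); auto; lra.
Qed.

Lemma outside a c b3 u0 b1 b2 : Hyp a c b3 u0 -> ~ Vr a c b3 u0 b1 b2 ->
  exists u, is_local_max01 (lF a c b3 b1 b2) u /\ is_global_max01 (lF a c b3 b1 b2) u /\
    forall v, is_local_max01 (lF a c b3 b1 b2) v -> v = u.
Proof.
  intros H HV.
  destruct (Rle_or_lt b2 (betaf a c b3 u0)) as [Hb|Hb].
  - destruct (shapeA a c b3 u0 b1 b2 H Hb) as [u [Hu [Hi Hd]]].
    exists u. apply unimodal; auto.
  - destruct (beta_pre a c b3 u0 b2 H Hb) as [al [ga HP]].
    destruct (Rle_or_lt b1 (B1f a c b3 ga)) as [E|E].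
    + destruct (shapeB2 a c b3 u0 b1 b2 al ga H HP E) as [u [_ [Hu [Hi Hd]]]].
      exists u. apply unimodal; auto.
    + destruct (Rlt_or_le b1 (B1f a c b3 al)) as [E'|E'].
      * exfalso. apply HV. apply (V_iff a c b3 u0 b1 b2 al ga H HP). auto.
      * destruct (shapeB1 a c b3 u0 b1 b2 al ga H HP E') as [u [_ [Hu [Hi Hd]]]].
        exists u. apply unimodal; auto.
Qed.

Lemma inside a c b3 u0 b1 b2 : Hyp a c b3 u0 -> Vr a c b3 u0 b1 b2 ->
  exists u1 m u2, u1 < u0 < u2 /\ Bi (lF a c b3 b1 b2) u1 m u2.
Proof.
  intros H HV. pose proof HV as [Hb [HL HU]].
  pose proof (LF_gt a c b3 u0 b1 H Hb).
  destruct (beta_pre a c b3 u0 b2 H ltac:(lra)) as [al [ga HP]].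
  pose proof HP as [Ha [Hg _]].
  apply (V_iff a c b3 u0 b1 b2 al ga H HP) in HV.
  destruct (shapeB3 a c b3 u0 b1 b2 al ga H HP (proj1 HV) (proj2 HV)) as [u1 [m [u2 [H1 [H2 HB]]]]].
  exists u1, m, u2. split. lra. auto.
Qed.

Lemma pow_lt_S x y n : 0 <= x -> x < y -> x ^ (S n) < y ^ (S n).
Proof.
  intros Hx Hxy. induction n. simpl; lra.
  change (x ^ S (S n)) with (x * x ^ S n). change (y ^ S (S n)) with (y * y ^ S n).
  assert (0 <= x ^ S n) by (apply pow_le; lra). nra.
Qed.

Lemma lF_pert a c b3 b1 b2 b1' b2' v : 0 <= v <= 1 ->
  lF a c b3 b1' b2' v = lF a c b3 b1 b2 v + (b1' - b1) * v + (b2' - b2) * v ^ (S (S a)).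
Proof. intros. unfold lF, lfun. ring. Qed.

Lemma no_cross a c b3 b1 b2 b1' b2' w1 w2 : b1 <= b1' -> b2 <= b2' -> 0 < (b1' - b1) + (b2' - b2) ->
  0 <= w1 -> w1 < w2 -> w2 <= 1 ->
  is_global_max01 (lF a c b3 b1 b2) w2 -> is_global_max01 (lF a c b3 b1' b2') w1 -> False.
Proof.
  intros H1 H2 H3 Hw1 Hw Hw2 [_ G2] [_ G1].
  assert (A1 := G2 w1 ltac:(lra)). assert (A2 := G1 w2 ltac:(lra)).
  rewrite (lF_pert a c b3 b1 b2 b1' b2' w1) in A2 by lra.
  rewrite (lF_pert a c b3 b1 b2 b1' b2' w2) in A2 by lra.
  pose proof (pow_lt_S w1 w2 (S a) Hw1 Hw).
  destruct (Rlt_or_le 0 (b1' - b1)) as [E|E].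
  - assert (0 < (b1' - b1) * (w2 - w1)) by (apply Rmult_lt_0_compat; lra).
    assert (0 <= (b2' - b2) * (w2 ^ S (S a) - w1 ^ S (S a))) by (apply Rmult_le_pos; lra).
    lra.
  - assert (0 <= (b1' - b1) * (w2 - w1)) by (apply Rmult_le_pos; lra).
    assert (0 < (b2' - b2) * (w2 ^ S (S a) - w1 ^ S (S a))) by (apply Rmult_lt_0_compat; lra).
    lra.
Qed.

Lemma Bi_facts f u1 m u2 : Bi f u1 m u2 ->
  (forall v, 0 <= v <= m -> f v <= f u1) /\ (forall v, m <= v <= 1 -> f v <= f u2).
Proof.
  intros [H1 [H2 [I1 [D1 [I2 D2]]]]]. split.
  - intros v Hv. destruct (Rle_or_lt v u1).
    + apply (incr_le f 0 u1); auto; lra.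
    + apply (decr_le f u1 m u1 v D1); lra.
  - intros v Hv. destruct (Rle_or_lt v u2).
    + apply (incr_le f m u2); auto; lra.
    + apply (decr_le f u2 1 u2 v D2); lra.
Qed.

Definition Sset (f : R -> R) lo hi := fun y => exists v, lo <= v <= hi /\ y = f v.
Definition hsup f lo hi := epsilon (inhabits 0) (fun m => is_lub (Sset f lo hi) m).

Lemma hsup_spec f lo hi B : lo <= hi -> (forall v, lo <= v <= hi -> f v <= B) ->
  is_lub (Sset f lo hi) (hsup f lo hi).
Proof.
  intros Hlh HB. unfold hsup. apply epsilon_spec.
  destruct (completeness (Sset f lo hi)) as [m Hm].
  - exists B. intros y [v [Hv ->]]. apply HB; auto.
  - exists (f lo). exists lo. split; [lra|auto].
  - exists m. auto.
Qed.

Lemma hsup_ge f lo hi B v : lo <= hi -> (forall v, lo <= v <= hi -> f v <= B) ->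
  lo <= v <= hi -> f v <= hsup f lo hi.
Proof. intros H1 H2 Hv. destruct (hsup_spec f lo hi B H1 H2) as [Hu _]. apply Hu. exists v; auto. Qed.

Lemma hsup_le f lo hi B : lo <= hi -> (forall v, lo <= v <= hi -> f v <= B) -> hsup f lo hi <= B.
Proof. intros H1 H2. destruct (hsup_spec f lo hi B H1 H2) as [_ Hl]. apply Hl.
  intros y [v [Hv ->]]. auto. Qed.

Lemma xlnx_lb v : 0 <= v <= 1 -> - 1 <= xlnx v.
Proof.
  intros Hv. unfold xlnx. destruct (Rle_dec v 0). lra.
  assert (0 < v) by lra. pose proof (ln_le_x1 (/v) ltac:(pos)). rewrite ln_Rinv in H0 by lra.
  assert (v * (- ln v) <= v * (/v - 1)) by (apply Rmult_le_compat_l; lra).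
  replace (v * (/v - 1)) with (1 - v) in H1 by (field; lra). nra.
Qed.

Lemma lF_bound a c b3 b1 b2 v : 0 <= v <= 1 -> lF a c b3 b1 b2 v <= Rabs b1 + Rabs b2 + Rabs b3 + 1.
Proof.
  intros Hv. unfold lF, lfun.
  pose proof (xlnx_lb v Hv). pose proof (xlnx_lb (1-v) ltac:(lra)).
  pose proof (bpow_bound b1 v 1 Hv). simpl pow in H1. rewrite Rmult_1_r in H1.
  pose proof (bpow_bound b2 v (S (S a)) Hv).
  pose proof (bpow_bound b3 v (S (S (S (c+a)))) Hv). lra.
Qed.

Definition hh a c b3 b1 b2 lo hi := hsup (lF a c b3 b1 b2) lo hi.

Lemma hh_ge a c b3 b1 b2 lo hi v : 0 <= lo -> lo <= hi -> hi <= 1 -> lo <= v <= hi ->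
  lF a c b3 b1 b2 v <= hh a c b3 b1 b2 lo hi.
Proof.
  intros. apply hsup_ge with (B := Rabs b1 + Rabs b2 + Rabs b3 + 1); auto.
  intros; apply lF_bound; lra.
Qed.

Lemma hh_le a c b3 b1 b2 lo hi B : lo <= hi ->
  (forall v, lo <= v <= hi -> lF a c b3 b1 b2 v <= B) -> hh a c b3 b1 b2 lo hi <= B.
Proof. intros. apply hsup_le; auto. Qed.

Lemma hh_lip a c b3 b1 b2 b2' lo hi : 0 <= lo -> lo <= hi -> hi <= 1 ->
  hh a c b3 b1 b2' lo hi <= hh a c b3 b1 b2 lo hi + Rabs (b2' - b2).
Proof.
  intros H0 H1 H2. apply hh_le; auto. intros v Hv.
  rewrite (lF_pert a c b3 b1 b2 b1 b2' v) by lra.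
  pose proof (hh_ge a c b3 b1 b2 lo hi v H0 H1 H2 Hv).
  pose proof (bpow_bound (b2' - b2) v (S (S a)) ltac:(lra)). lra.
Qed.

Definition Dl a c b3 u0 b1 b2 := hh a c b3 b1 b2 u0 1 - hh a c b3 b1 b2 0 u0.

Lemma Dl_cont a c b3 u0 b1 b2 : 0 < u0 < 1 -> continuity_pt (fun z => Dl a c b3 u0 b1 z) b2.
Proof.
  intros Hu0. unfold continuity_pt, continue_in, limit1_in, limit_in. simpl. unfold R_dist.
  intros eps He. exists (eps/2). split. lra. intros y [_ Hy].
  unfold Dl.
  pose proof (hh_lip a c b3 b1 b2 y u0 1 ltac:(lra) ltac:(lra) ltac:(lra)).
  pose proof (hh_lip a c b3 b1 y b2 u0 1 ltac:(lra) ltac:(lra) ltac:(lra)).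
  pose proof (hh_lip a c b3 b1 b2 y 0 u0 ltac:(lra) ltac:(lra) ltac:(lra)).
  pose proof (hh_lip a c b3 b1 y b2 0 u0 ltac:(lra) ltac:(lra) ltac:(lra)).
  rewrite Rabs_minus_sym in H0, H2. apply Rabs_def1; lra.
Qed.

Lemma Dl_uni_right a c b3 u0 b1 b2 u : 0 < u0 < 1 -> u0 < u -> Uni (lF a c b3 b1 b2) u ->
  0 < Dl a c b3 u0 b1 b2.
Proof.
  intros Hu0 Hu [Hu1 [Hi Hd]]. unfold Dl.
  assert (lF a c b3 b1 b2 u <= hh a c b3 b1 b2 u0 1) by (apply hh_ge; lra).
  assert (hh a c b3 b1 b2 0 u0 <= lF a c b3 b1 b2 u0).
  { apply hh_le. lra. intros v Hv. apply (incr_le _ 0 u); auto; lra. }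
  assert (lF a c b3 b1 b2 u0 < lF a c b3 b1 b2 u) by (apply Hi; lra).
  lra.
Qed.

Lemma Dl_uni_left a c b3 u0 b1 b2 u : 0 < u0 < 1 -> u < u0 -> Uni (lF a c b3 b1 b2) u ->
  Dl a c b3 u0 b1 b2 < 0.
Proof.
  intros Hu0 Hu [Hu1 [Hi Hd]]. unfold Dl.
  assert (lF a c b3 b1 b2 u <= hh a c b3 b1 b2 0 u0) by (apply hh_ge; lra).
  assert (hh a c b3 b1 b2 u0 1 <= lF a c b3 b1 b2 u0).
  { apply hh_le. lra. intros v Hv. apply (decr_le _ u 1); auto; lra. }
  assert (lF a c b3 b1 b2 u0 < lF a c b3 b1 b2 u) by (apply Hd; lra).
  lra.
Qed.

Lemma beta_inj_right a c b3 u0 x y : Hyp a c b3 u0 -> u0 <= x < 1 -> u0 <= y < 1 ->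
  betaf a c b3 x = betaf a c b3 y -> x = y.
Proof.
  intros H Hx Hy E. destruct (Rtotal_order x y) as [L|[L|L]]; auto.
  - pose proof (beta_inc a c b3 u0 x y H ltac:(lra) L ltac:(lra)). lra.
  - pose proof (beta_inc a c b3 u0 y x H ltac:(lra) L ltac:(lra)). lra.
Qed.

Lemma Dl_U a c b3 u0 b1 : Hyp a c b3 u0 -> b1 < B1f a c b3 u0 -> 0 < Dl a c b3 u0 b1 (UF a c b3 u0 b1).
Proof.
  intros H Hb. pose proof H as [_ [Hu0 _]].
  destruct (aF_spec a c b3 u0 b1 H Hb) as [As Bs].
  set (s := aF a c b3 u0 b1) in *.
  assert (Hbb : betaf a c b3 u0 < betaf a c b3 s) by (apply (beta_dec a c b3 u0); auto; lra).
  destruct (beta_pre a c b3 u0 _ H Hbb) as [al [ga HP]].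
  pose proof HP as [Ha [Hg [Hba Hbg]]].
  assert (al = s) by (apply (beta_inj_left a c b3 u0); auto; lra). subst al.
  destruct (shapeB1 a c b3 u0 b1 _ s ga H HP ltac:(lra)) as [u [Hu HU]].
  apply (Dl_uni_right a c b3 u0 b1 _ u); auto. lra.
Qed.

Lemma Dl_L a c b3 u0 b1 : Hyp a c b3 u0 -> b1 < B1f a c b3 u0 -> Dl a c b3 u0 b1 (LF a c b3 u0 b1) < 0.
Proof.
  intros H Hb. pose proof H as [_ [Hu0 _]].
  destruct (cF_spec a c b3 u0 b1 H Hb) as [Ct Dt].
  set (t := cF a c b3 u0 b1) in *.
  assert (Hbb : betaf a c b3 u0 < betaf a c b3 t) by (apply (beta_inc a c b3 u0); auto; lra).
  destruct (beta_pre a c b3 u0 _ H Hbb) as [al [ga HP]].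
  pose proof HP as [Ha [Hg [Hba Hbg]]].
  assert (ga = t) by (apply (beta_inj_right a c b3 u0); auto; lra). subst ga.
  destruct (shapeB2 a c b3 u0 b1 _ al t H HP ltac:(lra)) as [u [Hu HU]].
  apply (Dl_uni_left a c b3 u0 b1 _ u); auto. lra.
Qed.

Lemma Dl_bi a c b3 u0 b1 b2 u1 m u2 : 0 < u0 < 1 -> u1 < u0 < u2 -> Bi (lF a c b3 b1 b2) u1 m u2 ->
  Dl a c b3 u0 b1 b2 = 0 -> lF a c b3 b1 b2 u1 = lF a c b3 b1 b2 u2.
Proof.
  intros Hu0 Hu HB HD. pose proof (Bi_facts _ _ _ _ HB) as [F1 F2].
  pose proof HB as [H1 [H2 [I1 [D1 [I2 D2]]]]].
  set (f := lF a c b3 b1 b2) in *. unfold Dl in HD.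
  assert (G1 : f u1 <= hh a c b3 b1 b2 0 u0) by (apply hh_ge; lra).
  assert (G2 : f u2 <= hh a c b3 b1 b2 u0 1) by (apply hh_ge; lra).
  destruct (Rtotal_order (f u1) (f u2)) as [E|[E|E]]; auto; exfalso.
  -
    assert (hh a c b3 b1 b2 0 u0 <= Rmax (f u1) (f u0)).
    { apply hh_le. lra. intros v Hv. destruct (Rle_or_lt v m).
      - apply Rle_trans with (f u1). apply F1; lra. apply Rmax_l.
      - apply Rle_trans with (f u0). apply (incr_le f m u2); auto; lra. apply Rmax_r. }
    assert (f u0 < f u2).
    { destruct (Rle_or_lt u0 m).
      - pose proof (F1 u0 ltac:(lra)). lra.
      - apply I2; lra. }
    unfold Rmax in H. destruct (Rle_dec (f u1) (f u0)); lra.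
  -
    assert (hh a c b3 b1 b2 u0 1 <= Rmax (f u2) (f u0)).
    { apply hh_le. lra. intros v Hv. destruct (Rle_or_lt m v).
      - apply Rle_trans with (f u2). apply F2; lra. apply Rmax_l.
      - apply Rle_trans with (f u0). apply (decr_le f u1 m); auto; lra. apply Rmax_r. }
    assert (f u0 < f u1).
    { destruct (Rlt_or_le u0 m).
      - apply D1; lra.
      - pose proof (F2 u0 ltac:(lra)). lra. }
    unfold Rmax in H. destruct (Rle_dec (f u2) (f u0)); lra.
Qed.

Definition allglob a c b3 b1 b2 := forall u, is_local_max01 (lF a c b3 b1 b2) u ->
  is_global_max01 (lF a c b3 b1 b2) u.

Lemma bi_glob a c b3 b1 b2 u1 m u2 : Bi (lF a c b3 b1 b2) u1 m u2 ->
  lF a c b3 b1 b2 u1 = lF a c b3 b1 b2 u2 -> allglob a c b3 b1 b2.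
Proof.
  intros HB E. pose proof HB as [H1 [H2 [I1 [D1 [I2 D2]]]]].
  destruct (bimodal _ u1 m u2 H1 H2 I1 D1 I2 D2) as [L1 [L2 [Only G]]].
  intros u Hu. destruct (Only u Hu) as [->| ->].
  - split. lra. intros v Hv. specialize (G v Hv). rewrite <- E in G. unfold Rmax in G.
    destruct (Rle_dec _ _); lra.
  - split. lra. intros v Hv. specialize (G v Hv). rewrite E in G. unfold Rmax in G.
    destruct (Rle_dec _ _); lra.
Qed.

Lemma r_exists a c b3 u0 b1 : Hyp a c b3 u0 -> b1 < B1f a c b3 u0 ->
  exists b2, LF a c b3 u0 b1 < b2 < UF a c b3 u0 b1 /\ allglob a c b3 b1 b2.
Proof.
  intros H Hb. pose proof H as [_ [Hu0 _]].
  pose proof (UL_lt a c b3 u0 b1 H Hb).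
  destruct (ivt_up (fun z => Dl a c b3 u0 b1 z) (LF a c b3 u0 b1) (UF a c b3 u0 b1) 0) as [b2 [Hb2 HD]]; auto.
  - intros w _. apply Dl_cont; auto.
  - apply Dl_L; auto.
  - apply Dl_U; auto.
  - exists b2. split; auto.
    destruct (inside a c b3 u0 b1 b2 H (conj Hb Hb2)) as [u1 [m [u2 [Hu HB]]]].
    apply (bi_glob a c b3 b1 b2 u1 m u2 HB).
    apply (Dl_bi a c b3 u0 b1 b2 u1 m u2); auto.
Qed.

Lemma bi_pts a c b3 u0 b1 b2 : Hyp a c b3 u0 -> Vr a c b3 u0 b1 b2 -> allglob a c b3 b1 b2 ->
  exists u1 u2, 0 <= u1 < u0 /\ u0 < u2 <= 1 /\
    is_global_max01 (lF a c b3 b1 b2) u1 /\ is_global_max01 (lF a c b3 b1 b2) u2.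
Proof.
  intros H HV HG.
  destruct (inside a c b3 u0 b1 b2 H HV) as [u1 [m [u2 [Hu HB]]]].
  pose proof HB as [H1 [H2 [I1 [D1 [I2 D2]]]]].
  destruct (bimodal _ u1 m u2 H1 H2 I1 D1 I2 D2) as [L1 [L2 _]].
  exists u1, u2. split. lra. split. lra. split; apply HG; auto.
Qed.

Lemma r_unique a c b3 u0 b1 b2 b2' : Hyp a c b3 u0 -> Vr a c b3 u0 b1 b2 -> Vr a c b3 u0 b1 b2' ->
  allglob a c b3 b1 b2 -> allglob a c b3 b1 b2' -> b2 = b2'.
Proof.
  intros H V1 V2 G1 G2.
  destruct (bi_pts a c b3 u0 b1 b2 H V1 G1) as [u1 [u2 [Hu1 [Hu2 [A1 A2]]]]].
  destruct (bi_pts a c b3 u0 b1 b2' H V2 G2) as [v1 [v2 [Hv1 [Hv2 [B1' B2']]]]].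
  destruct (Rtotal_order b2 b2') as [E|[E|E]]; auto; exfalso.
  - apply (no_cross a c b3 b1 b2 b1 b2' v1 u2); auto; lra.
  - apply (no_cross a c b3 b1 b2' b1 b2 u1 v2); auto; lra.
Qed.

Lemma r_decr a c b3 u0 x y bx by_ : Hyp a c b3 u0 -> x < y ->
  Vr a c b3 u0 x bx -> Vr a c b3 u0 y by_ -> allglob a c b3 x bx -> allglob a c b3 y by_ -> by_ < bx.
Proof.
  intros H Hxy V1 V2 G1 G2.
  destruct (bi_pts a c b3 u0 x bx H V1 G1) as [u1 [u2 [Hu1 [Hu2 [A1 A2]]]]].
  destruct (bi_pts a c b3 u0 y by_ H V2 G2) as [v1 [v2 [Hv1 [Hv2 [B1' B2']]]]].
  destruct (Rlt_or_le by_ bx) as [E|E]; auto; exfalso.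
  apply (no_cross a c b3 x bx y by_ v1 u2); auto; lra.
Qed.

Lemma u0eq_iff a c b3 u : u0_eq (S(S a)) (S(S(S(c+a)))) b3 u <-> b3 = kf a c u.
Proof.
  unfold u0_eq, kf. replace (S(S(S(c+a))) - 1)%nat with (S(S(c+a))) by lia.
  rewrite INR_SSS, INR_SS. tauto.
Qed.

Lemma b2c_eq a c b3 u0 : Hyp a c b3 u0 ->
  beta2c (S(S a)) (S(S(S(c+a)))) u0 = betaf a c b3 u0.
Proof.
  intros [_ [Hu0 Hk]]. unfold beta2c. replace (S (S a) - 1)%nat with (S a) by lia.
  rewrite INR_SSS, INR_SS. rewrite <- Hk. unfold betaf, kf. norm. field. nz.
Qed.

Lemma b1c_eq a c b3 u0 : Hyp a c b3 u0 ->
  beta1c (S(S a)) (S(S(S(c+a)))) u0 = B1f a c b3 u0.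
Proof.
  intros [_ [Hu0 Hk]]. rewrite B1_formula by lra. unfold beta1c.
  rewrite INR_SSS, INR_SS. rewrite <- Hk.
  unfold Rdiv at 1. rewrite ln_mult, ln_Rinv by (try apply Rinv_0_lt_compat; lra).
  unfold kf. norm. field. nz.
Qed.

Theorem proposition3 (p q : nat) (b3 : R) :
  (2 <= p)%nat -> (p < q)%nat -> (q <= 5 * p - 1)%nat ->
  exists u0, 0 < u0 < 1 /\ u0_eq p q b3 u0 /\
  (forall u, 0 < u < 1 -> u0_eq p q b3 u -> u = u0) /\
  let b1c := beta1c p q u0 in
  let b2c := beta2c p q u0 in
  exists L U : R -> R,
    (forall x, x < b1c -> continuity_pt L x /\ continuity_pt U x) /\
    (forall x y, x < y < b1c -> L y < L x /\ U y < U x) /\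
    (forall x, x < b1c -> L x < U x) /\
    (forall eps, 0 < eps -> exists d, 0 < d /\ forall x, b1c - d < x < b1c ->
        Rabs (L x - b2c) < eps /\ Rabs (U x - b2c) < eps) /\
    (forall M, exists N, forall x, x < N -> x < b1c -> M < L x /\ M < U x) /\
    (forall b1 b2, ~ (b1 < b1c /\ L b1 < b2 < U b1) ->
       exists u, is_local_max01 (lfun p q b3 b1 b2) u /\
                 is_global_max01 (lfun p q b3 b1 b2) u /\
                 forall v, is_local_max01 (lfun p q b3 b1 b2) v -> v = u) /\
    (forall b1 b2, b1 < b1c -> L b1 < b2 < U b1 ->
       exists u1 u2, 0 < u1 < u2 /\ u2 < 1 /\
         is_local_max01 (lfun p q b3 b1 b2) u1 /\
         is_local_max01 (lfun p q b3 b1 b2) u2 /\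
         forall v, is_local_max01 (lfun p q b3 b1 b2) v -> v = u1 \/ v = u2) /\
    (exists r : R -> R,
       (forall b1, b1 < b1c ->
          L b1 < r b1 < U b1 /\
          (forall u, is_local_max01 (lfun p q b3 b1 (r b1)) u ->
                     is_global_max01 (lfun p q b3 b1 (r b1)) u) /\
          (forall b2, L b1 < b2 < U b1 ->
             (forall u, is_local_max01 (lfun p q b3 b1 b2) u ->
                        is_global_max01 (lfun p q b3 b1 b2) u) ->
             b2 = r b1)) /\
       (forall x y, x < y < b1c -> r y < r x)).
Proof.
  intros Hp Hpq Hq.
  destruct (ltac:(exists (p-2)%nat, (q-p-1)%nat; lia) :
    exists a c, p = S (S a) /\ q = S(S(S(c+a))) /\ (c <= 4*a+6)%nat) as [a [c [-> [-> Hca]]]].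
  assert (Hc : INR c <= 4*INR a + 6).
  { apply le_INR in Hca. rewrite plus_INR, mult_INR in Hca. simpl in Hca. lra. }
  destruct (u0_exists a c b3 Hc) as [u0 [Hu0 Hk]].
  assert (H : Hyp a c b3 u0) by (split; [auto|split; auto]).
  exists u0. split; [auto|split; [|split]].
  { apply u0eq_iff. auto. }
  { intros u Hu Hequ. apply u0eq_iff in Hequ.
    destruct (Rtotal_order u u0) as [E|[E|E]]; auto; exfalso.
    - pose proof (k_incr a c u u0 Hc ltac:(lra) E ltac:(lra)). lra.
    - pose proof (k_incr a c u0 u Hc ltac:(lra) E ltac:(lra)). lra. }
  cbv zeta. rewrite (b1c_eq a c b3 u0 H), (b2c_eq a c b3 u0 H).
  change (lfun (S (S a)) (S (S (S (c + a)))) b3) with (lF a c b3).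
  exists (LF a c b3 u0), (UF a c b3 u0).
  split; [|split; [|split; [|split; [|split; [|split; [|split]]]]]].
  - intros x Hx. apply UL_cont; auto.
  - intros x y [Hxy Hy]. apply UL_decr; auto.
  - intros x Hx. apply UL_lt; auto.
  - apply UL_corner; auto.
  - apply UL_inf; auto.
  - intros b1 b2 HV. apply (outside a c b3 u0 b1 b2 H HV).
  - intros b1 b2 Hb HLU.
    destruct (inside a c b3 u0 b1 b2 H (conj Hb HLU)) as [u1 [m [u2 [Hu HB]]]].
    pose proof HB as [H1 [H2 [I1 [D1 [I2 D2]]]]].
    destruct (bimodal _ u1 m u2 H1 H2 I1 D1 I2 D2) as [L1 [L2 [Only _]]].
    exists u1, u2. split. lra. split. lra. auto.
  - set (rF := fun b1 => epsilon (inhabits 0)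
       (fun b2 => LF a c b3 u0 b1 < b2 < UF a c b3 u0 b1 /\ allglob a c b3 b1 b2)).
    assert (Hr : forall b1, b1 < B1f a c b3 u0 ->
       LF a c b3 u0 b1 < rF b1 < UF a c b3 u0 b1 /\ allglob a c b3 b1 (rF b1)).
    { intros b1 Hb. unfold rF. apply epsilon_spec. apply r_exists; auto. }
    exists rF. split.
    + intros b1 Hb. destruct (Hr b1 Hb) as [HLU HG]. split; [auto|split; [auto|]].
      intros b2 HLU2 HG2. apply (r_unique a c b3 u0 b1); auto; split; auto.
    + intros x y [Hxy Hy].
      destruct (Hr x ltac:(lra)) as [HLUx HGx]. destruct (Hr y Hy) as [HLUy HGy].
      apply (r_decr a c b3 u0 x y); auto; split; auto; lra.
Qed.
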